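(* Let $M_0>0$ and $M>M_0$. There exists $r=r(M_0,M)>0$ such that for each $(\varphi,\tau_0)\in\mathrm{Lip}_\alpha\times C_+(\Omega)$ with $\|\varphi\|_{\mathrm{Lip}_\alpha}+\|\tau_0\|_\infty\le M_0$, system (1.1) admits a unique solution $(A,\tau)\in C((-\infty,r],C(\Omega))\times C([0,r],C(\Omega))$ on $[0,r]$, and moreover $\|A(t,\cdot)\|_\infty\le M$ for all $t\in[0,r]$.
   Context: $\Omega\subset\mathbb R^n$ compact, $C(\Omega)$ with sup norm, $C_+(\Omega)$ nonnegative functions, $\alpha\ge0$ fixed. Standing assumption: $F:C(\Omega)\times C(\Omega)\times C(\Omega^2)\to C(\Omega)$ is Lipschitz on bounded sets (for every $M>0$ there is $L(M)$ with $\|F(u,v,w)-F(\hat u,\hat v,\hat w)\|_\infty\le L(M)[\|u-\hat u\|_\infty+\|v-\hat v\|_\infty+\|w-\hat w\|_\infty]$ when all arguments have norm $\le M$); $f:C(\Omega)\to C(\Omega)$ is Lipschitz, $0<f(\phi)(x)\le M_f$ for a constant $M_f$, and non-increasing for the pointwise order. $\mathrm{Lip}_\alpha$: $\phi\in C((-\infty,0],C(\Omega))$ with $\theta\mapsto e^{-\alpha|\theta|}\phi(\theta)$ bounded and Lipschitz, norm = sup norm + Lipschitz seminorm of that map. A solution of (1.1) on $[0,r]$ with initial distribution $(\varphi,\tau_0)$: continuous $A:(-\infty,r]\to C(\Omega)$, $\tau:[0,r]\to C_+(\Omega)$ with $A=\varphi$ on $(-\infty,0]$, $A(t,x)=\varphi(0,x)+\int_0^tF(A(l,\cdot),\tau(l,\cdot),A(l-\tau(l)))(x)dl$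 for $t\in[0,r]$, where $A(l-\tau(l))\in C(\Omega^2)$ is $(x,y)\mapsto A(l-\tau(l,x),y)$, and $\int_{t-\tau(t,x)}^tf(A(s,\cdot))(x)ds=\int_{-\tau_0(x)}^0f(\varphi(s,\cdot))(x)ds$ for $t\in[0,r]$, $x\in\Omega$. *)

(* Defs.v *)
From Stdlib Require Import Reals Lra List Classical ClassicalEpsilon.
Open Scope R_scope.

(* A point of R^n is encoded as a sequence [nat -> R] vanishing from index n on. *)
Definition inRn (n : nat) (x : nat -> R) : Prop := forall i, (n <= i)%nat -> x i = 0.

Fixpoint sumsq (n : nat) (x y : nat -> R) : R :=
  match n with
  | O => 0
  | S k => sumsq k x y + (x k - y k) ^ 2
  end.

Definition distn (n : nat) (x y : nat -> R) : R := sqrt (sumsq n x y).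

Definition openRn (n : nat) (U : (nat -> R) -> Prop) : Prop :=
  forall x, inRn n x -> U x ->
    exists eps, 0 < eps /\ forall y, inRn n y -> distn n x y < eps -> U y.

Definition compactRn (n : nat) (Om : (nat -> R) -> Prop) : Prop :=
  (forall x, Om x -> inRn n x) /\
  forall (I : Type) (U : I -> (nat -> R) -> Prop),
    (forall i, openRn n (U i)) ->
    (forall x, Om x -> exists i, U i x) ->
    exists l : list I, forall x, Om x -> exists i, In i l /\ U i x.

Definition Pt (Om : (nat -> R) -> Prop) : Type := {x : nat -> R | Om x}.

Definition contOm (n : nat) (Om : (nat -> R) -> Prop) (u : Pt Om -> R) : Prop :=
  forall p eps, 0 < eps -> exists delta, 0 < delta /\
    forall q, distn n (proj1_sig p) (proj1_sig q) < delta -> Rabs (u p - u q) < eps.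

Definition contOm2 (n : nat) (Om : (nat -> R) -> Prop) (w : Pt Om * Pt Om -> R) : Prop :=
  forall p eps, 0 < eps -> exists delta, 0 < delta /\
    forall q, distn n (proj1_sig (fst p)) (proj1_sig (fst q)) < delta ->
              distn n (proj1_sig (snd p)) (proj1_sig (snd q)) < delta ->
              Rabs (w p - w q) < eps.

Record CO (n : nat) (Om : (nat -> R) -> Prop) : Type :=
  mkCO { cfun :> Pt Om -> R; ccont : contOm n Om cfun }.

Record CO2 (n : nat) (Om : (nat -> R) -> Prop) : Type :=
  mkCO2 { cfun2 :> Pt Om * Pt Om -> R; ccont2 : contOm2 n Om cfun2 }.

(* least upper bound of {0} ∪ E if it exists, 0 otherwise (used for
   nonnegative quantities, where it is the usual supremum, with sup ∅ = 0) *)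
Definition supR (E : R -> Prop) : R :=
  match excluded_middle_informative
          (exists s, is_lub (fun r => r = 0 \/ E r) s) with
  | left H => proj1_sig (constructive_indefinite_description _ H)
  | right _ => 0
  end.

Definition supn {D : Type} (u : D -> R) : R :=
  supR (fun r => exists x, r = Rabs (u x)).

Definition weighted {n Om} (alpha : R) (phi : R -> CO n Om) (th : R) : Pt Om -> R :=
  fun x => exp (- alpha * Rabs th) * phi th x.

Definition inLip {n Om} (alpha : R) (phi : R -> CO n Om) : Prop :=
  (forall t, t <= 0 -> forall eps, 0 < eps -> exists delta, 0 < delta /\
     forall s, s <= 0 -> Rabs (s - t) < delta ->
       supn (fun x => phi s x - phi t x) < eps) /\
  (exists B, forall th, th <= 0 -> supn (weighted alpha phi th) <= B) /\
  (exists K, forall th1 th2, th1 <= 0 -> th2 <= 0 ->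
     supn (fun x => weighted alpha phi th1 x - weighted alpha phi th2 x)
       <= K * Rabs (th1 - th2)).

Definition lipnorm {n Om} (alpha : R) (phi : R -> CO n Om) : R :=
  supR (fun r => exists th, th <= 0 /\ r = supn (weighted alpha phi th)) +
  supR (fun r => exists th1 th2, th1 <= 0 /\ th2 <= 0 /\ th1 <> th2 /\
          r = supn (fun x => weighted alpha phi th1 x - weighted alpha phi th2 x)
              / Rabs (th1 - th2)).

Definition F_lip_bounded {n Om}
  (F : CO n Om -> CO n Om -> CO2 n Om -> CO n Om) : Prop :=
  forall M, 0 < M -> exists L, forall (u v u' v' : CO n Om) (w w' : CO2 n Om),
    supn u <= M -> supn v <= M -> supn w <= M ->
    supn u' <= M -> supn v' <= M -> supn w' <= M ->
    supn (fun x => F u v w x - F u' v' w' x)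
      <= L * (supn (fun x => u x - u' x) + supn (fun x => v x - v' x)
              + supn (fun p => w p - w' p)).

Definition f_assumptions {n Om} (f : CO n Om -> CO n Om) : Prop :=
  (exists Lf, forall u v : CO n Om, supn (fun x => f u x - f v x) <= Lf * supn (fun x => u x - v x)) /\
  (exists Mf, forall (u : CO n Om) x, 0 < f u x /\ f u x <= Mf) /\
  (forall u v : CO n Om, (forall x, u x <= v x) -> forall x, f v x <= f u x).

Definition is_solution {n Om}
  (F : CO n Om -> CO n Om -> CO2 n Om -> CO n Om) (f : CO n Om -> CO n Om)
  (phi : R -> CO n Om) (tau0 : CO n Om) (r : R)
  (A : R -> CO n Om) (tau : R -> CO n Om) : Prop :=
  (forall t, t <= r -> forall eps, 0 < eps -> exists delta, 0 < delta /\
     forall s, s <= r -> Rabs (s - t) < delta -> supn (fun x => A s x - A t x) < eps) /\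
  (forall t, 0 <= t <= r -> forall eps, 0 < eps -> exists delta, 0 < delta /\
     forall s, 0 <= s <= r -> Rabs (s - t) < delta ->
       supn (fun x => tau s x - tau t x) < eps) /\
  (forall t, 0 <= t <= r -> forall x, 0 <= tau t x) /\
  (forall t, t <= 0 -> A t = phi t) /\
  (exists D : R -> CO2 n Om,
     (forall l, 0 <= l <= r -> forall x y, D l (x, y) = A (l - tau l x) y) /\
     forall t, 0 <= t <= r -> forall x,
       exists pr : Riemann_integrable (fun l => F (A l) (tau l) (D l) x) 0 t,
         A t x = phi 0 x + RiemannInt pr) /\
  (* threshold condition determining the delay *)
  (forall t, 0 <= t <= r -> forall x,
     exists (pr1 : Riemann_integrable (fun s => f (A s) x) (t - tau t x) t)
            (pr2 : Riemann_integrable (fun s => f (phi s) x) (- tau0 x) 0),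
       RiemannInt pr1 = RiemannInt pr2).

(* Main.v *)
Require Import Defs.
From Coquelicot Require Import Coquelicot.
From Stdlib Require Import Reals Lra Lia Psatz List ZArith Classical ClassicalEpsilon FunctionalExtensionality ProofIrrelevance.
Open Scope R_scope.

Lemma sumsq_ge0 n x y : 0 <= sumsq n x y.
Proof. induction n; simpl; [lra|]. assert (0 <= (x n - y n)^2) by (apply pow2_ge_0). lra. Qed.

Lemma sumsq_sym n x y : sumsq n x y = sumsq n y x.
Proof. induction n; simpl; [lra|rewrite IHn; nra]. Qed.

Lemma distn_sym n x y : distn n x y = distn n y x.
Proof. unfold distn; now rewrite sumsq_sym. Qed.

Lemma distn_ge0 n x y : 0 <= distn n x y.
Proof. apply sqrt_pos. Qed.

Lemma distn_refl n x : distn n x x = 0.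
Proof. unfold distn. assert (sumsq n x x = 0) as ->. induction n; simpl; [lra|rewrite IHn; ring]. apply sqrt_0. Qed.

Lemma cs2 p q a b : 0 <= p -> 0 <= q ->
  p * q + a * b <= sqrt (p*p + a*a) * sqrt (q*q+b*b).
Proof.
  intros Hp Hq. rewrite <- sqrt_mult by nra.
  apply Rle_trans with (Rabs (p*q+a*b)). apply Rle_abs.
  rewrite <- sqrt_Rsqr_abs. apply sqrt_le_1_alt. unfold Rsqr. assert (0 <= (p*b - q*a)*(p*b-q*a)) by apply Rle_0_sqr. nra.
Qed.

Lemma distn_triang n x y z : distn n x z <= distn n x y + distn n y z.
Proof.
  unfold distn. induction n; simpl.
  - rewrite sqrt_0; lra.
  - set (S := sumsq n x z) in *. set (A := sumsq n x y) in *. set (B := sumsq n y z) in *.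
    assert (HS := sumsq_ge0 n x z). assert (HA := sumsq_ge0 n x y). assert (HB := sumsq_ge0 n y z).
    fold S A B in HS, HA, HB.
    set (a := x n - y n). set (b := y n - z n).
    replace (x n - z n) with (a + b) by (unfold a,b; ring).
    set (p := sqrt A). set (q := sqrt B).
    assert (Hp : 0 <= p) by apply sqrt_pos. assert (Hq : 0 <= q) by apply sqrt_pos.
    assert (HpA : p * p = A) by (apply sqrt_sqrt; lra).
    assert (HqB : q * q = B) by (apply sqrt_sqrt; lra).
    assert (HSle : S <= A + B + 2 * p * q).
    { assert (sqrt S * sqrt S = S) by (apply sqrt_sqrt; lra).
      assert (0 <= sqrt S) by apply sqrt_pos. fold p q in IHn. assert (sqrt S * sqrt S <= (p+q)*(p+q)) by (apply Rmult_le_compat; lra). nra. }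
    assert (Hc := cs2 p q a b Hp Hq). rewrite HpA, HqB in Hc.
    set (u := sqrt (A + a*a)) in *. set (v := sqrt (B + b*b)) in *.
    assert (Hu : 0 <= u) by apply sqrt_pos. assert (Hv : 0 <= v) by apply sqrt_pos.
    assert (Huu : u * u = A + a*a) by (apply sqrt_sqrt; assert (0 <= a*a) by apply Rle_0_sqr; assert (0 <= b*b) by apply Rle_0_sqr; lra).
    assert (Hvv : v * v = B + b*b) by (apply sqrt_sqrt; assert (0 <= a*a) by apply Rle_0_sqr; assert (0 <= b*b) by apply Rle_0_sqr; lra).
    replace (S + (a + b) * ((a + b) * 1)) with (S + (a+b)*(a+b)) by ring.
    replace (A + a * (a * 1)) with (A + a*a) by ring. replace (B + b * (b * 1)) with (B + b*b) by ring.
    fold u v.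
    rewrite <- (sqrt_square (u+v)) by lra. apply sqrt_le_1_alt. nra.
Qed.

Lemma supR_ge0 E : 0 <= supR E.
Proof.
  unfold supR. destruct excluded_middle_informative as [H|H]; [|lra].
  destruct constructive_indefinite_description as [s Hs]. simpl. destruct Hs as [Hs _]. apply Hs. now left.
Qed.

Lemma supR_spec E B : (forall r, E r -> r <= B) ->
  (forall r, E r -> r <= supR E) /\ (forall C, 0 <= C -> (forall r, E r -> r <= C) -> supR E <= C).
Proof.
  intros HB. unfold supR. destruct excluded_middle_informative as [H|H].
  - destruct constructive_indefinite_description as [s Hs]. simpl. destruct Hs as [Hs1 Hs2]. split.
    + intros r Hr. apply Hs1. now right.
    + intros C HC HCr. apply Hs2. intros r [->|Hr]; auto.
  - exfalso. apply H. edestruct completeness as [s Hs]; [| |exists s; exact Hs].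
    + exists (Rmax 0 B). intros r [->|Hr]. apply Rmax_l. eapply Rle_trans; [apply HB; auto| apply Rmax_r].
    + exists 0. now left.
Qed.

Lemma supR_le E C : 0 <= C -> (forall r, E r -> r <= C) -> supR E <= C.
Proof. intros H1 H2. apply (supR_spec E C H2); auto. Qed.

Lemma supR_ub E B r : (forall r, E r -> r <= B) -> E r -> r <= supR E.
Proof. intros H1 H2. apply (supR_spec E B H1); auto. Qed.

Lemma supn_ge0 {D} (u : D -> R) : 0 <= supn u.
Proof. apply supR_ge0. Qed.

Lemma supn_le {D} (u : D -> R) C : 0 <= C -> (forall x, Rabs (u x) <= C) -> supn u <= C.
Proof. intros H1 H2. apply supR_le; auto. intros r [x ->]. auto. Qed.

Lemma supn_ub {D} (u : D -> R) B x : (forall x, Rabs (u x) <= B) -> Rabs (u x) <= supn u.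
Proof. intros H. apply (supR_ub _ B). intros r [y ->]; auto. now exists x. Qed.

Lemma fin_min (g : nat -> R) : (forall i, 0 < g i) -> forall N, exists m, 0 < m /\ forall i, (i <= N)%nat -> m <= g i.
Proof.
  intros Hg N. induction N as [|N [m [Hm Hi]]].
  - exists (g 0%nat). split; auto. intros i Hi. replace i with 0%nat by lia. lra.
  - exists (Rmin m (g (S N))). split. apply Rmin_glb_lt; auto.
    intros i Hi'. destruct (Nat.eq_dec i (S N)) as [->|Hne]. apply Rmin_r.
    eapply Rle_trans. apply Rmin_l. apply Hi. lia.
Qed.

Lemma list_min {A} (l : list A) (g : A -> R) : (forall a, 0 < g a) -> exists m, 0 < m /\ forall a, In a l -> m <= g a.
Proof.
  intros Hg. induction l as [|a l [m [Hm Hi]]].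
  - exists 1. split. lra. intros a [].
  - exists (Rmin m (g a)). split. apply Rmin_glb_lt; auto.
    intros b [<-|Hb]. apply Rmin_r. eapply Rle_trans. apply Rmin_l. auto.
Qed.

Lemma list_max {A} (l : list A) (g : A -> R) : exists B, forall a, In a l -> g a <= B.
Proof.
  induction l as [|a l [B Hi]].
  - exists 0. intros a [].
  - exists (Rmax B (g a)). intros b [<-|Hb]. apply Rmax_r. eapply Rle_trans. apply Hi; auto. apply Rmax_l.
Qed.

Lemma compact_finite n Om (HOm : compactRn n Om) (d : Pt Om -> R) :
  (forall p, 0 < d p) -> exists l : list (Pt Om), forall q : Pt Om,
    exists p, In p l /\ distn n (proj1_sig p) (proj1_sig q) < d p.
Proof.
  intros Hd. destruct HOm as [Hin Hc].
  destruct (Hc (Pt Om) (fun p y => inRn n y /\ distn n (proj1_sig p) y < d p)) as [l Hl].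
  - intros p y Hy [_ Hpy]. exists (d p - distn n (proj1_sig p) y). split. lra.
    intros z Hz Hyz. split; auto. pose proof (distn_triang n (proj1_sig p) y z). lra.
  - intros x Hx. exists (exist _ x Hx). simpl. split. auto. rewrite distn_refl. apply Hd.
  - exists l. intros q. destruct (Hl (proj1_sig q) (proj2_sig q)) as [i [Hi [_ Hq]]]. exists i; auto.
Qed.

Lemma CO_bounded n Om (HOm : compactRn n Om) (u : Pt Om -> R) :
  contOm n Om u -> exists B, forall x, Rabs (u x) <= B.
Proof.
  intros Hu.
  set (d := fun p => proj1_sig (constructive_indefinite_description _ (Hu p 1 Rlt_0_1))).
  assert (Hd : forall p, 0 < d p /\ forall q, distn n (proj1_sig p) (proj1_sig q) < d p -> Rabs (u p - u q) < 1).
  { intros p. unfold d. destruct constructive_indefinite_description as [e He]. exact He. }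
  destruct (compact_finite n Om HOm d) as [l Hl]. intros p; apply Hd.
  destruct (list_max l (fun p => Rabs (u p))) as [B HB].
  exists (B + 1). intros q. destruct (Hl q) as [p [Hp Hpq]]. apply Hd in Hpq.
  pose proof (HB p Hp). pose proof (Rabs_triang_inv (u p) (u q)). rewrite Rabs_minus_sym in Hpq.
  pose proof (Rabs_triang_inv (u q) (u p)). lra.
Qed.

Lemma CO_posmin n Om (HOm : compactRn n Om) (u : Pt Om -> R) :
  contOm n Om u -> (forall x, 0 < u x) -> exists m, 0 < m /\ forall x, m <= u x.
Proof.
  intros Hu Hpos.
  assert (H2 : forall p, 0 < u p / 2) by (intros p; specialize (Hpos p); lra).
  set (d := fun p => proj1_sig (constructive_indefinite_description _ (Hu p _ (H2 p)))).
  assert (Hd : forall p, 0 < d p /\ forall q, distn n (proj1_sig p) (proj1_sig q) < d p -> Rabs (u p - u q) < u p / 2).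
  { intros p. unfold d. destruct constructive_indefinite_description as [e He]. exact He. }
  destruct (compact_finite n Om HOm d) as [l Hl]. intros p; apply Hd.
  destruct (list_min l (fun p => u p / 2)) as [m [Hm Hml]]. auto.
  exists m. split; auto. intros q. destruct (Hl q) as [p [Hp Hpq]]. apply Hd in Hpq.
  pose proof (Hml p Hp). apply Rabs_def2 in Hpq. simpl in *. lra.
Qed.

Lemma Rdiv_le_0_compat a b : 0 <= a -> 0 < b -> 0 <= a / b.
Proof. intros. unfold Rdiv. apply Rmult_le_pos; auto. left. apply Rinv_0_lt_compat; auto. Qed.

Lemma grid_point lo hi N s : (1 <= N)%nat -> lo <= s <= hi ->
  exists i, (i <= N)%nat /\ Rabs (s - (lo + INR i * ((hi - lo) / INR N))) <= (hi - lo) / INR N.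
Proof.
  intros HN Hs. assert (HNr : 1 <= INR N) by (apply (le_INR 1); lia).
  destruct (Req_dec lo hi) as [Heq|Hne].
  - exists 0%nat. split. lia. subst. replace s with hi by lra. simpl.
    replace (hi - hi) with 0 by ring. unfold Rdiv. rewrite !Rmult_0_l, Rplus_0_r, Rminus_diag, Rabs_R0. lra.
  - set (st := (hi - lo) / INR N).
    assert (Hst : 0 < st) by (unfold st; apply Rdiv_lt_0_compat; lra).
    set (v := (s - lo) / st).
    assert (Hv0 : 0 <= v) by (unfold v; apply Rdiv_le_0_compat; lra).
    assert (HvN : v <= INR N).
    { unfold v. apply Rmult_le_reg_r with st; auto. unfold Rdiv. rewrite Rmult_assoc, Rinv_l, Rmult_1_r by lra.
      unfold st. field_simplify; lra. }
    set (k := Zfloor v). destruct (Zfloor_bound v) as [Hk1 Hk2]. fold k in Hk1, Hk2.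
    assert (Hk0 : (0 <= k)%Z) by (apply Zfloor_lub; simpl; lra).
    assert (HkN : (k <= Z.of_nat N)%Z) by (apply le_IZR; rewrite <- INR_IZR_INZ; lra).
    exists (Z.to_nat k). split. lia.
    rewrite INR_IZR_INZ, Z2Nat.id by auto. fold st.
    assert (Hsv : s - lo = v * st) by (unfold v; field; lra).
    replace (s - (lo + IZR k * st)) with ((v - IZR k) * st) by lra.
    rewrite Rabs_right by (apply Rle_ge, Rmult_le_pos; lra).
    assert ((v - IZR k) * st <= 1 * st) by (apply Rmult_le_compat_r; lra). lra.
Qed.

Lemma equi n Om (h : R -> Pt Om -> R) lo hi Lam :
  lo <= hi -> 0 <= Lam ->
  (forall s, lo <= s <= hi -> contOm n Om (h s)) ->
  (forall s s' x, lo <= s <= hi -> lo <= s' <= hi -> Rabs (h s x - h s' x) <= Lam * Rabs (s - s')) ->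
  forall x eps, 0 < eps -> exists delta, 0 < delta /\ forall y, distn n (proj1_sig x) (proj1_sig y) < delta ->
    forall s, lo <= s <= hi -> Rabs (h s x - h s y) < eps.
Proof.
  intros Hlh HL Hc HLip x eps Heps.
  set (N := (Z.to_nat (up (3 * Lam * (hi - lo) / eps)) + 1)%nat).
  assert (HN1 : (1 <= N)%nat) by (unfold N; lia).
  assert (HNr : 1 <= INR N) by (apply (le_INR 1); lia).
  assert (HNbig : 3 * Lam * (hi - lo) / eps < INR N).
  { unfold N. rewrite plus_INR. destruct (archimed (3 * Lam * (hi - lo) / eps)) as [H1 _].
    destruct (Z_lt_le_dec (up (3 * Lam * (hi - lo) / eps)) 0) as [Hz|Hz].
    - assert (0 <= 3 * Lam * (hi - lo) / eps) by (apply Rdiv_le_0_compat; nra).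
      apply IZR_lt in Hz. lra.
    - rewrite INR_IZR_INZ, Z2Nat.id by auto. simpl. lra. }
  set (st := (hi - lo) / INR N).
  assert (Hst0 : 0 <= st) by (unfold st; apply Rdiv_le_0_compat; lra).
  assert (HLst : Lam * st < eps / 3).
  { unfold st. apply Rmult_lt_reg_r with (INR N). lra.
    replace (Lam * ((hi - lo) / INR N) * INR N) with (Lam * (hi - lo)) by (field; lra).
    apply Rmult_lt_compat_r with (r := eps / 3) in HNbig; [|lra].
    replace (3 * Lam * (hi - lo) / eps * (eps / 3)) with (Lam * (hi - lo)) in HNbig by (field; lra). lra. }
  set (sg := fun i : nat => Rmin (lo + INR i * st) hi).
  assert (Hsg : forall i, lo <= sg i <= hi).
  { intros i. unfold sg. split. apply Rmin_glb; [|lra]. assert (0 <= INR i * st) by (apply Rmult_le_pos; auto using pos_INR). lra. apply Rmin_r. }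
  assert (He3 : 0 < eps / 3) by lra.
  set (g := fun i => proj1_sig (constructive_indefinite_description _ (Hc (sg i) (Hsg i) x _ He3))).
  assert (Hg : forall i, 0 < g i /\ forall y, distn n (proj1_sig x) (proj1_sig y) < g i -> Rabs (h (sg i) x - h (sg i) y) < eps / 3).
  { intros i. unfold g. destruct constructive_indefinite_description as [d Hd]. exact Hd. }
  destruct (fin_min g (fun i => proj1 (Hg i)) N) as [d [Hd Hdi]].
  exists d. split; auto. intros y Hy s Hs.
  destruct (grid_point lo hi N s HN1 Hs) as [i [HiN Hi]]. fold st in Hi.
  assert (Hsgi : sg i = lo + INR i * st).
  { unfold sg. apply Rmin_left. unfold st. apply le_INR in HiN.
    replace (lo + INR i * ((hi - lo) / INR N)) with (lo + (hi - lo) * (INR i / INR N)) by (field; lra).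
    assert (INR i / INR N <= 1). { apply Rmult_le_reg_r with (INR N). lra. unfold Rdiv. rewrite Rmult_assoc, Rinv_l by lra. lra. }
    assert ((hi - lo) * (INR i / INR N) <= (hi - lo) * 1) by (apply Rmult_le_compat_l; lra). lra. }
  rewrite <- Hsgi in Hi.
  assert (H1 := HLip s (sg i) x Hs (Hsg i)). assert (H2 := HLip (sg i) s y (Hsg i) Hs).
  assert (H3 := proj2 (Hg i) y (Rlt_le_trans _ _ _ Hy (Hdi i HiN))).
  rewrite Rabs_minus_sym in H2.
  assert (Lam * Rabs (s - sg i) <= Lam * st) by (apply Rmult_le_compat_l; auto).
  replace (h s x - h s y) with ((h s x - h (sg i) x) + (h (sg i) x - h (sg i) y) + (h (sg i) y - h s y)) by ring.
  eapply Rle_lt_trans. apply Rabs_triang. eapply Rle_lt_trans. apply Rplus_le_compat_r. apply Rabs_triang.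
  rewrite (Rabs_minus_sym (h (sg i) y)). rewrite (Rabs_minus_sym (sg i)) in H2. lra.
Qed.

Lemma cont_of_eps (f : R -> R) x :
  (forall eps, 0 < eps -> exists d, 0 < d /\ forall y, Rabs (y - x) < d -> Rabs (f y - f x) < eps) ->
  continuous f x.
Proof.
  intros H. apply filterlim_locally. intros eps. destruct (H eps (cond_pos eps)) as [d [Hd Hy]].
  exists (mkposreal d Hd). intros y Hb. apply Hy. exact Hb.
Qed.

Definition ContOn (h : R -> R) lo hi := forall t, lo <= t <= hi -> forall eps, 0 < eps ->
  exists d, 0 < d /\ forall s, lo <= s <= hi -> Rabs (s - t) < d -> Rabs (h s - h t) < eps.

Definition clamp lo hi s := Rmax lo (Rmin s hi).

Lemma clamp_in lo hi s : lo <= hi -> lo <= clamp lo hi s <= hi.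
Proof. intros. unfold clamp. split. apply Rmax_l. apply Rmax_lub. lra. apply Rmin_r. Qed.

Lemma clamp_id lo hi s : lo <= s <= hi -> clamp lo hi s = s.
Proof. intros. unfold clamp. rewrite Rmin_left by lra. rewrite Rmax_right; lra. Qed.

Lemma clamp_lip lo hi s t : Rabs (clamp lo hi s - clamp lo hi t) <= Rabs (s - t).
Proof.
  unfold clamp, Rmax, Rmin. repeat (destruct Rle_dec); unfold Rabs; repeat (destruct Rcase_abs); lra.
Qed.

Lemma exRInt_cont h lo hi : lo <= hi -> ContOn h lo hi ->
  forall a b, lo <= a <= hi -> lo <= b <= hi -> ex_RInt h a b.
Proof.
  intros Hlh Hc a b Ha Hb.
  apply ex_RInt_ext with (f := fun s => h (clamp lo hi s)).
  { intros x Hx. rewrite clamp_id; auto. split.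
    - apply Rle_trans with (Rmin a b). apply Rmin_glb; lra. lra.
    - apply Rle_trans with (Rmax a b). lra. apply Rmax_lub; lra. }
  apply (@ex_RInt_continuous R_CompleteNormedModule). intros z _. apply cont_of_eps. intros eps Heps.
  destruct (Hc (clamp lo hi z) (clamp_in lo hi z Hlh) eps Heps) as [d [Hd Hs]].
  exists d. split; auto. intros y Hy. apply Hs. apply clamp_in; auto.
  eapply Rle_lt_trans. apply clamp_lip. auto.
Qed.

Lemma Lip_ContOn h lo hi L : (forall s t, lo <= s <= hi -> lo <= t <= hi -> Rabs (h s - h t) <= L * Rabs (s - t)) -> ContOn h lo hi.
Proof.
  intros HL t Ht eps Heps. exists (eps / (Rabs L + 1)). split.
  apply Rdiv_lt_0_compat; auto. pose proof (Rabs_pos L); lra.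
  intros s Hs Hst. eapply Rle_lt_trans. apply HL; auto.
  assert (HL0 : 0 < Rabs L + 1) by (pose proof (Rabs_pos L); lra).
  apply Rle_lt_trans with ((Rabs L + 1) * Rabs (s - t)).
  apply Rmult_le_compat_r. apply Rabs_pos. pose proof (Rle_abs L); lra.
  apply Rlt_le_trans with ((Rabs L+1) * (eps/(Rabs L +1))); [apply Rmult_lt_compat_l; auto | right; field; lra].
Qed.

Lemma RInt_abs_le h a b C : ex_RInt h a b ->
  (forall t, Rmin a b <= t <= Rmax a b -> Rabs (h t) <= C) -> Rabs (RInt h a b) <= Rabs (b - a) * C.
Proof.
  intros He Hb. destruct (Rle_dec a b) as [Hab|Hab].
  - rewrite Rmin_left, Rmax_right in Hb by lra. rewrite (Rabs_right (b - a)) by lra.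
    apply abs_RInt_le_const; auto.
  - rewrite Rmin_right, Rmax_left in Hb by lra. rewrite (Rabs_left (b - a)) by lra.
    assert (He' : ex_RInt h b a) by (apply ex_RInt_swap; auto).
    rewrite <- (opp_RInt_swap h b a He'). change (opp (RInt h b a)) with (- RInt h b a). rewrite Rabs_Ropp.
    replace (- (b - a)) with (a - b) by ring. apply abs_RInt_le_const; auto. lra.
Qed.

Lemma RInt_lower h a b m : a <= b -> ex_RInt h a b -> (forall t, a <= t <= b -> m <= h t) ->
  m * (b - a) <= RInt h a b.
Proof.
  intros Hab He Hm. assert (E: RInt (fun _ => m) a b = m*(b-a)) by (rewrite RInt_const; apply Rmult_comm).
  rewrite <- E. apply RInt_le; [lra| apply ex_RInt_const| exact He| intros; apply Hm; lra].
Qed.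

Lemma RInt_upper h a b m : a <= b -> ex_RInt h a b -> (forall t, a <= t <= b -> h t <= m) ->
  RInt h a b <= m * (b - a).
Proof.
  intros Hab He Hm. assert (E: RInt (fun _ => m) a b = m*(b-a)) by (rewrite RInt_const; apply Rmult_comm).
  rewrite <- E. apply RInt_le; [lra| exact He| apply ex_RInt_const| intros; apply Hm; lra].
Qed.

Lemma RInt_Chasles' h a b c : ex_RInt h a b -> ex_RInt h b c -> RInt h a b + RInt h b c = RInt h a c.
Proof. intros. apply (RInt_Chasles h a b c); auto. Qed.

Lemma RInt_minus' h g a b : ex_RInt h a b -> ex_RInt g a b ->
  RInt (fun x => h x - g x) a b = RInt h a b - RInt g a b.
Proof. intros. apply (RInt_minus h g a b); auto. Qed.

Lemma ex_RInt_minus' h g a b : ex_RInt h a b -> ex_RInt g a b -> ex_RInt (fun x => h x - g x) a b.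
Proof. intros. apply (ex_RInt_minus h g a b); auto. Qed.

Lemma RInt_point' h a : RInt h a a = 0.
Proof. apply (@RInt_point R_CompleteNormedModule). Qed.

Lemma exp_lip a b : Rabs (exp a - exp b) <= exp (Rmax a b) * Rabs (a - b).
Proof.
  destruct (Rle_dec b a) as [H|H].
  - rewrite Rmax_left by lra. pose proof (exp_ineq1_le (b - a)).
    assert (exp b = exp a * exp (b - a)) by (rewrite <- exp_plus; f_equal; ring).
    pose proof (exp_pos a).
    rewrite Rabs_right by (apply Rle_ge; assert (exp b <= exp a) by (destruct (Req_dec a b); [subst; lra| left; apply exp_increasing; lra]); lra).
    rewrite Rabs_right by lra. nra.
  - rewrite Rmax_right by lra. pose proof (exp_ineq1_le (a - b)).
    assert (exp a = exp b * exp (a - b)) by (rewrite <- exp_plus; f_equal; ring).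
    pose proof (exp_pos b).
    rewrite Rabs_left1 by (assert (exp a <= exp b) by (left; apply exp_increasing; lra); lra).
    rewrite Rabs_left by lra. nra.
Qed.

Definition RI (h : R -> R) (a b : R) : R := RInt h a b.

Definition ExI (h : R -> R) lo hi := forall a b, lo <= a <= hi -> lo <= b <= hi -> ex_RInt h a b.

Lemma ExI_cont h lo hi : lo <= hi -> ContOn h lo hi -> ExI h lo hi.
Proof. intros H1 H2 a b Ha Hb. apply (exRInt_cont h lo hi); auto. Qed.

Lemma ExI_sub h lo hi lo' hi' : ExI h lo hi -> lo <= lo' -> hi' <= hi -> ExI h lo' hi'.
Proof. intros H H1 H2 a b Ha Hb. apply H; lra. Qed.

Lemma RI_swap h a b : ex_RInt h b a -> RI h a b = - RI h b a.
Proof. intros H. unfold RI. rewrite <- (opp_RInt_swap h b a H). reflexivity. Qed.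

Lemma RI_lower h a b m : a <= b -> ex_RInt h a b -> (forall t, a <= t <= b -> m <= h t) ->
  m * (b - a) <= RI h a b.
Proof. apply RInt_lower. Qed.

Lemma RI_point h a : RI h a a = 0.
Proof. apply RInt_point'. Qed.

Lemma chasles h lo hi a b c : ExI h lo hi -> lo <= a <= hi -> lo <= b <= hi -> lo <= c <= hi ->
  RI h a c = RI h a b + RI h b c.
Proof. intros H Ha Hb Hc. symmetry. unfold RI. apply RInt_Chasles'; apply H; auto. Qed.

Lemma int_bound h lo hi a b C : ExI h lo hi -> lo <= a <= hi -> lo <= b <= hi ->
  (forall s, lo <= s <= hi -> Rabs (h s) <= C) -> Rabs (RI h a b) <= Rabs (b - a) * C.
Proof.
  intros H Ha Hb HC. unfold RI. apply RInt_abs_le. apply H; auto. intros t Ht. apply HC. split.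
  apply Rle_trans with (Rmin a b); [apply Rmin_glb; lra| lra].
  apply Rle_trans with (Rmax a b); [lra| apply Rmax_lub; lra].
Qed.

Lemma int_diff h g lo hi a b d : ExI h lo hi -> ExI g lo hi -> lo <= a <= hi -> lo <= b <= hi ->
  (forall s, lo <= s <= hi -> Rabs (h s - g s) <= d) -> Rabs (RI h a b - RInt g a b) <= Rabs (b - a) * d.
Proof.
  intros Hh Hg Ha Hb Hd. unfold RI. rewrite <- RInt_minus' by auto.
  apply RInt_abs_le. apply ex_RInt_minus'; auto. intros t Ht. apply Hd. split.
  apply Rle_trans with (Rmin a b); [apply Rmin_glb; lra| lra].
  apply Rle_trans with (Rmax a b); [lra| apply Rmax_lub; lra].
Qed.

Lemma psi_mono h lo hi m t t1 t2 : ExI h lo hi -> (forall s, lo <= s <= hi -> m <= h s) ->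
  lo <= t <= hi -> lo <= t1 <= hi -> lo <= t2 <= hi ->
  m * Rabs (t1 - t2) <= Rabs (RI h t1 t - RI h t2 t).
Proof.
  intros He Hm Ht H1 H2. rewrite (chasles h lo hi t1 t2 t) by auto.
  replace (RI h t1 t2 + RI h t2 t - RI h t2 t) with (RI h t1 t2) by ring.
  destruct (Rle_dec t1 t2).
  - rewrite (Rabs_left1 (t1 - t2)) by lra.
    pose proof (RI_lower h t1 t2 m r (He _ _ H1 H2) (fun s Hs => Hm s (conj (Rle_trans _ _ _ (proj1 H1) (proj1 Hs)) (Rle_trans _ _ _ (proj2 Hs) (proj2 H2))))).
    eapply Rle_trans; [|apply Rle_abs]. lra.
  - rewrite (Rabs_right (t1 - t2)) by lra.
    pose proof (RI_lower h t2 t1 m ltac:(lra) (He _ _ H2 H1) (fun s Hs => Hm s (conj (Rle_trans _ _ _ (proj1 H2) (proj1 Hs)) (Rle_trans _ _ _ (proj2 Hs) (proj2 H1))))).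
    rewrite (RI_swap h t1 t2 (He _ _ H2 H1)). rewrite Rabs_Ropp.
    eapply Rle_trans; [|apply Rle_abs]. lra.
Qed.

Lemma tau_cmp1 h1 h2 lo hi m d t tau1 tau2 G1 G2 :
  ExI h1 lo hi -> ExI h2 lo hi -> (forall s, lo <= s <= hi -> m <= h1 s) ->
  (forall s, lo <= s <= hi -> Rabs (h1 s - h2 s) <= d) ->
  lo <= t <= hi -> lo <= t - tau1 <= hi -> lo <= t - tau2 <= hi -> 0 <= tau2 ->
  RI h1 (t - tau1) t = G1 -> RI h2 (t - tau2) t = G2 ->
  m * Rabs (tau1 - tau2) <= Rabs (G1 - G2) + tau2 * d.
Proof.
  intros He1 He2 Hm Hd Ht H1 H2 Htau E1 E2.
  pose proof (psi_mono h1 lo hi m t (t - tau1) (t - tau2) He1 Hm Ht H1 H2) as P.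
  replace (t - tau1 - (t - tau2)) with (- (tau1 - tau2)) in P by ring. rewrite Rabs_Ropp in P.
  pose proof (int_diff h2 h1 lo hi (t - tau2) t d He2 He1 H2 Ht) as Q.
  replace (t - (t - tau2)) with tau2 in Q by ring. rewrite (Rabs_right tau2) in Q by lra.
  assert (Q' : Rabs (RI h2 (t - tau2) t - RI h1 (t - tau2) t) <= tau2 * d).
  { apply Q. intros s Hs. rewrite Rabs_minus_sym. auto. }
  rewrite E1, E2 in *. 
  pose proof (Rabs_triang (G1 - G2) (G2 - RI h1 (t - tau2) t)).
  replace (G1 - G2 + (G2 - RI h1 (t - tau2) t)) with (G1 - RI h1 (t - tau2) t) in H by ring. lra.
Qed.

Lemma tau_cmp2 h lo hi m Mf t t' tau1 tau2 :
  ExI h lo hi -> (forall s, lo <= s <= hi -> m <= h s) -> (forall s, lo <= s <= hi -> Rabs (h s) <= Mf) ->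
  lo <= t <= hi -> lo <= t' <= hi -> lo <= t - tau1 <= hi -> lo <= t - tau2 <= hi -> lo <= t' - tau2 <= hi ->
  RI h (t - tau1) t = RI h (t' - tau2) t' ->
  m * Rabs (tau1 - tau2) <= 2 * Mf * Rabs (t - t').
Proof.
  intros He Hm HM Ht Ht' H1 H2 H3 E.
  pose proof (psi_mono h lo hi m t (t - tau1) (t - tau2) He Hm Ht H1 H2) as P.
  replace (t - tau1 - (t - tau2)) with (- (tau1 - tau2)) in P by ring. rewrite Rabs_Ropp in P.
  rewrite E in P.
  rewrite (chasles h lo hi (t' - tau2) (t - tau2) t') in P by auto.
  rewrite (chasles h lo hi (t - tau2) t' t) in P by auto.
  replace (RI h (t' - tau2) (t - tau2) + RI h (t - tau2) t' - (RI h (t - tau2) t' + RI h t' t))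
    with (RI h (t' - tau2) (t - tau2) - RI h t' t) in P by ring.
  pose proof (int_bound h lo hi (t' - tau2) (t - tau2) Mf He H3 H2 HM) as B1.
  pose proof (int_bound h lo hi t' t Mf He Ht' Ht HM) as B2.
  replace (t - tau2 - (t' - tau2)) with (t - t') in B1 by ring.
  pose proof (Rabs_triang (RI h (t' - tau2) (t - tau2)) (- RI h t' t)). rewrite Rabs_Ropp in H.
  unfold Rminus in *. lra.
Qed.

Lemma cont_const n Om c : contOm n Om (fun _ => c).
Proof. intros p eps He. exists 1. split. lra. intros q _. rewrite Rminus_diag, Rabs_R0. auto. Qed.

Lemma cont2_const n Om c : contOm2 n Om (fun _ => c).
Proof. intros p eps He. exists 1. split. lra. intros q _ _. rewrite Rminus_diag, Rabs_R0. auto. Qed.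

Lemma cont_minus n Om u v : contOm n Om u -> contOm n Om v -> contOm n Om (fun x => u x - v x).
Proof.
  intros Hu Hv p eps He. destruct (Hu p (eps/2)) as [d1 [Hd1 H1]]. lra. destruct (Hv p (eps/2)) as [d2 [Hd2 H2]]. lra.
  exists (Rmin d1 d2). split. apply Rmin_glb_lt; auto. intros q Hq.
  specialize (H1 q (Rlt_le_trans _ _ _ Hq (Rmin_l _ _))). specialize (H2 q (Rlt_le_trans _ _ _ Hq (Rmin_r _ _))).
  replace (u p - v p - (u q - v q)) with ((u p - u q) - (v p - v q)) by ring.
  eapply Rle_lt_trans. apply Rabs_triang. rewrite Rabs_Ropp. lra.
Qed.

Definition mkC {n Om} (u : Pt Om -> R) : CO n Om :=
  match excluded_middle_informative (contOm n Om u) with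
  | left H => mkCO n Om u H
  | right _ => mkCO n Om (fun _ => 0) (cont_const n Om 0)
  end.

Lemma mkC_val n Om (u : Pt Om -> R) : contOm n Om u -> forall x, (@mkC n Om u) x = u x.
Proof. intros H x. unfold mkC. destruct excluded_middle_informative; [reflexivity|contradiction]. Qed.

Lemma mkC_co n Om (c : CO n Om) : mkC (cfun n Om c) = c.
Proof.
  destruct c as [u Hu]. unfold mkC. simpl. destruct excluded_middle_informative; [|contradiction].
  f_equal. apply proof_irrelevance.
Qed.

Definition mkC2 {n Om} (w : Pt Om * Pt Om -> R) : CO2 n Om :=
  match excluded_middle_informative (contOm2 n Om w) with
  | left H => mkCO2 n Om w H
  | right _ => mkCO2 n Om (fun _ => 0) (cont2_const n Om 0)
  end.

Lemma mkC2_val n Om (w : Pt Om * Pt Om -> R) : contOm2 n Om w -> forall p, (@mkC2 n Om w) p = w p.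
Proof. intros H x. unfold mkC2. destruct excluded_middle_informative; [reflexivity|contradiction]. Qed.

Lemma CO_ext n Om (c d : CO n Om) : (forall x, c x = d x) -> c = d.
Proof.
  destruct c as [u Hu], d as [v Hv]. simpl. intros H. assert (u = v) by (apply functional_extensionality; auto).
  subst. f_equal. apply proof_irrelevance.
Qed.

Lemma supn_ub_CO n Om (HOm : compactRn n Om) (u : Pt Om -> R) x : contOm n Om u -> Rabs (u x) <= supn u.
Proof. intros H. destruct (CO_bounded n Om HOm u H) as [B HB]. apply (supn_ub u B x HB). Qed.

Lemma F_est n Om (HOm : compactRn n Om) (F : CO n Om -> CO n Om -> CO2 n Om -> CO n Om) Mst Lp
  (HL : forall (u v u' v' : CO n Om) (w w' : CO2 n Om),
    supn u <= Mst -> supn v <= Mst -> supn w <= Mst ->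
    supn u' <= Mst -> supn v' <= Mst -> supn w' <= Mst ->
    supn (fun x => F u v w x - F u' v' w' x)
      <= Lp * (supn (fun x => u x - u' x) + supn (fun x => v x - v' x) + supn (fun p => w p - w' p)))
  (u v u' v' : CO n Om) (w w' : CO2 n Om) du dv dw :
  0 <= Mst -> 0 <= Lp -> 0 <= du -> 0 <= dv -> 0 <= dw ->
  (forall x, Rabs (u x) <= Mst) -> (forall x, Rabs (v x) <= Mst) -> (forall p, Rabs (w p) <= Mst) ->
  (forall x, Rabs (u' x) <= Mst) -> (forall x, Rabs (v' x) <= Mst) -> (forall p, Rabs (w' p) <= Mst) ->
  (forall x, Rabs (u x - u' x) <= du) -> (forall x, Rabs (v x - v' x) <= dv) -> (forall p, Rabs (w p - w' p) <= dw) ->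
  forall x, Rabs (F u v w x - F u' v' w' x) <= Lp * (du + dv + dw).
Proof.
  intros HM HLp Hdu Hdv Hdw Hu Hv Hw Hu' Hv' Hw' Du Dv Dw x.
  eapply Rle_trans. apply (supn_ub_CO n Om HOm (fun x => F u v w x - F u' v' w' x)). apply cont_minus; apply ccont.
  eapply Rle_trans. apply HL; apply supn_le; auto.
  apply Rmult_le_compat_l; auto. repeat apply Rplus_le_compat; apply supn_le; auto.
Qed.

Lemma f_est n Om (HOm : compactRn n Om) (f : CO n Om -> CO n Om) Lf
  (HL : forall u v : CO n Om, supn (fun x => f u x - f v x) <= Lf * supn (fun x => u x - v x))
  (u v : CO n Om) d : 0 <= Lf -> 0 <= d -> (forall x, Rabs (u x - v x) <= d) ->
  forall x, Rabs (f u x - f v x) <= Lf * d.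
Proof.
  intros HLf Hd Huv x. eapply Rle_trans. apply (supn_ub_CO n Om HOm (fun x => f u x - f v x)). apply cont_minus; apply ccont.
  eapply Rle_trans. apply HL. apply Rmult_le_compat_l; auto. apply supn_le; auto.
Qed.

Lemma cont_scal n Om c u : contOm n Om u -> contOm n Om (fun x => c * u x).
Proof.
  intros Hu p eps He. destruct (Hu p (eps / (Rabs c + 1))) as [d [Hd H]].
  apply Rdiv_lt_0_compat; auto. pose proof (Rabs_pos c); lra.
  exists d. split; auto. intros q Hq. specialize (H q Hq).
  rewrite <- Rmult_minus_distr_l, Rabs_mult.
  assert (0 < Rabs c + 1) by (pose proof (Rabs_pos c); lra).
  apply Rle_lt_trans with ((Rabs c + 1) * Rabs (u p - u q)).
  apply Rmult_le_compat_r; [apply Rabs_pos| lra].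
  apply Rlt_le_trans with ((Rabs c+1) * (eps/(Rabs c +1))); [apply Rmult_lt_compat_l; auto | right; field; lra].
Qed.

Section PhiFacts.
Variables (n : nat) (Om : (nat -> R) -> Prop) (alpha : R).
Hypotheses (HOm : compactRn n Om) (Halpha : 0 <= alpha).
Variables (M0 : R) (phi : R -> CO n Om) (tau0 : CO n Om).
Hypotheses (Hphi : inLip alpha phi) (Htau0 : forall x, 0 <= tau0 x) (Hnorm : lipnorm alpha phi + supn tau0 <= M0).

Definition S1 := (fun r => exists th, th <= 0 /\ r = supn (weighted alpha phi th)).
Definition S2 := (fun r => exists th1 th2, th1 <= 0 /\ th2 <= 0 /\ th1 <> th2 /\
          r = supn (fun x => weighted alpha phi th1 x - weighted alpha phi th2 x) / Rabs (th1 - th2)).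

Lemma lipnorm_split : lipnorm alpha phi = supR S1 + supR S2.
Proof. reflexivity. Qed.

Lemma weighted_cont th : contOm n Om (weighted alpha phi th).
Proof. unfold weighted. apply cont_scal. apply ccont. Qed.

Lemma supn_tau0_le : supn tau0 <= M0.
Proof. pose proof (supR_ge0 S1). pose proof (supR_ge0 S2). rewrite lipnorm_split in Hnorm. lra. Qed.

Lemma tau0_le x : tau0 x <= M0.
Proof.
  pose proof (supn_ub_CO n Om HOm tau0 x (ccont _ _ tau0)). pose proof supn_tau0_le.
  pose proof (Rle_abs (tau0 x)). lra.
Qed.

Lemma w_bound th x : th <= 0 -> Rabs (exp (- alpha * Rabs th) * phi th x) <= M0.
Proof.
  intros Hth. destruct Hphi as [_ [[B HB] _]].
  change (exp (- alpha * Rabs th) * phi th x) with (weighted alpha phi th x).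
  eapply Rle_trans. apply (supn_ub_CO n Om HOm). apply weighted_cont.
  assert (supn (weighted alpha phi th) <= supR S1).
  { apply (supR_ub S1 B). intros r [t [Ht ->]]. auto. exists th. auto. }
  pose proof (supR_ge0 S2). pose proof (supn_ge0 tau0). rewrite lipnorm_split in Hnorm. lra.
Qed.

Lemma w_lip th1 th2 x : th1 <= 0 -> th2 <= 0 ->
  Rabs (exp (- alpha * Rabs th1) * phi th1 x - exp (- alpha * Rabs th2) * phi th2 x) <= M0 * Rabs (th1 - th2).
Proof.
  intros H1 H2. destruct Hphi as [_ [_ [Kl HK]]].
  destruct (Req_dec th1 th2) as [<-|Hne].
  { rewrite !Rminus_diag, Rabs_R0. lra. }
  assert (Hpos : 0 < Rabs (th1 - th2)) by (apply Rabs_pos_lt; lra).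
  set (D := supn (fun x => weighted alpha phi th1 x - weighted alpha phi th2 x)).
  assert (HD : D / Rabs (th1 - th2) <= supR S2).
  { apply (supR_ub S2 (Rmax Kl 0)).
    - intros r [a [b [Ha [Hb [Hab ->]]]]]. assert (0 < Rabs (a - b)) by (apply Rabs_pos_lt; lra).
      apply Rle_trans with Kl; [|apply Rmax_l]. unfold Rdiv. apply Rmult_le_reg_r with (Rabs (a - b)); auto.
      rewrite Rmult_assoc, Rinv_l, Rmult_1_r by lra. apply HK; auto.
    - exists th1, th2. repeat split; auto. }
  pose proof (supR_ge0 S1). pose proof (supn_ge0 tau0). rewrite lipnorm_split in Hnorm.
  assert (HD2 : D <= M0 * Rabs (th1 - th2)).
  { assert (D / Rabs (th1 - th2) <= M0) by lra. unfold Rdiv in H0.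
    apply Rmult_le_reg_r with (/ Rabs (th1 - th2)). apply Rinv_0_lt_compat; auto.
    rewrite Rmult_assoc, Rinv_r, Rmult_1_r by lra. lra. }
  eapply Rle_trans; [|exact HD2]. unfold D.
  apply (supn_ub_CO n Om HOm (fun x => weighted alpha phi th1 x - weighted alpha phi th2 x)).
  apply cont_minus; apply weighted_cont.
Qed.

Definition KK := M0 + 1.
Definition EK := exp (alpha * KK).
Definition Bphi := M0 * EK.
Definition Lphi := EK * M0 * (1 + alpha).

Lemma M0_nonneg : 0 <= M0.
Proof. pose proof (supn_ge0 tau0). pose proof supn_tau0_le. lra. Qed.

Lemma phi_decomp th x : phi th x = exp (alpha * Rabs th) * (exp (- alpha * Rabs th) * phi th x).
Proof. rewrite <- Rmult_assoc, <- exp_plus. replace (alpha * Rabs th + - alpha * Rabs th) with 0 by ring. rewrite exp_0. ring. Qed.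

Lemma exp_le_EK th : - KK <= th <= 0 -> exp (alpha * Rabs th) <= EK.
Proof.
  intros H. unfold EK. unfold KK in *. destruct (Req_dec (alpha * Rabs th) (alpha * KK)) as [E|E]. rewrite E; right; reflexivity.
  left. apply exp_increasing. rewrite Rabs_left1 in * by lra. unfold KK in E.
  assert (alpha * - th <= alpha * (M0+1)) by (apply Rmult_le_compat_l; lra). lra.
Qed.

Lemma phi_bound th x : - KK <= th <= 0 -> Rabs (phi th x) <= Bphi.
Proof.
  intros H. rewrite phi_decomp, Rabs_mult. rewrite (Rabs_right (exp _)) by (left; apply exp_pos).
  unfold Bphi. rewrite Rmult_comm. apply Rmult_le_compat. apply Rabs_pos. left; apply exp_pos.
  apply w_bound; lra. apply exp_le_EK; auto.
Qed.

Lemma phi_lip th1 th2 x : - KK <= th1 <= 0 -> - KK <= th2 <= 0 ->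
  Rabs (phi th1 x - phi th2 x) <= Lphi * Rabs (th1 - th2).
Proof.
  intros H1 H2. rewrite (phi_decomp th1), (phi_decomp th2).
  set (e1 := exp (alpha * Rabs th1)). set (e2 := exp (alpha * Rabs th2)).
  set (w1 := exp (- alpha * Rabs th1) * phi th1 x). set (w2 := exp (- alpha * Rabs th2) * phi th2 x).
  replace (e1 * w1 - e2 * w2) with (e1 * (w1 - w2) + (e1 - e2) * w2) by ring.
  eapply Rle_trans. apply Rabs_triang. rewrite !Rabs_mult.
  assert (He1 : Rabs e1 <= EK) by (unfold e1; rewrite Rabs_right by (left; apply exp_pos); apply exp_le_EK; auto).
  assert (Hw : Rabs (w1 - w2) <= M0 * Rabs (th1 - th2)) by (apply w_lip; lra).
  assert (Hw2 : Rabs w2 <= M0) by (apply w_bound; lra).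
  assert (He : Rabs (e1 - e2) <= EK * (alpha * Rabs (th1 - th2))).
  { eapply Rle_trans. apply exp_lip. apply Rmult_le_compat. left; apply exp_pos. apply Rabs_pos.
    unfold Rmax; destruct Rle_dec; apply exp_le_EK; auto.
    rewrite <- Rmult_minus_distr_l, Rabs_mult, Rabs_right by lra. apply Rmult_le_compat_l; auto.
    apply Rabs_triang_inv2. }
  pose proof M0_nonneg. pose proof (Rabs_pos (th1 - th2)). pose proof (Rabs_pos w2). pose proof (Rabs_pos (w1 - w2)).
  pose proof (Rabs_pos e1). pose proof (Rabs_pos (e1 - e2)).
  assert (Rabs e1 * Rabs (w1 - w2) <= EK * (M0 * Rabs (th1 - th2))) by (apply Rmult_le_compat; auto).
  assert (Rabs (e1 - e2) * Rabs w2 <= EK * (alpha * Rabs (th1 - th2)) * M0) by (apply Rmult_le_compat; auto).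
  unfold Lphi. nra.
Qed.

Lemma tau0_cont : contOm n Om tau0.
Proof. apply ccont. Qed.

End PhiFacts.

Lemma lip_continuity (h : R -> R) L : (forall s t, Rabs (h s - h t) <= L * Rabs (s - t)) -> continuity h.
Proof.
  intros HL z. apply continuity_pt_filterlim. apply cont_of_eps.
  intros eps He. destruct (Lip_ContOn h (z - 1) (z + 1) L (fun s t _ _ => HL s t) z ltac:(lra) eps He) as [d [Hd Hs]].
  exists (Rmin d 1). split. apply Rmin_glb_lt; lra. intros y Hy.
  apply Hs. assert (Rabs (y - z) < 1) by (eapply Rlt_le_trans; [exact Hy| apply Rmin_r]).
  apply Rabs_def2 in H. lra. eapply Rlt_le_trans; [exact Hy| apply Rmin_l].
Qed.

Section Ex.
Variables (n : nat) (Om : (nat -> R) -> Prop) (alpha : R)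
  (F : CO n Om -> CO n Om -> CO2 n Om -> CO n Om) (f : CO n Om -> CO n Om).
Hypotheses (HOm : compactRn n Om) (Halpha : 0 <= alpha).
Variables (M0 M : R).
Hypotheses (HM0 : 0 < M0) (HM : M0 < M).
Variables (phi : R -> CO n Om) (tau0 : CO n Om).
Hypotheses (Hphi : inLip alpha phi) (Htau0 : forall x, 0 <= tau0 x) (Hnorm : lipnorm alpha phi + supn tau0 <= M0).

Let K := KK M0.
Let MB := Rmax M (Bphi alpha M0).
Let Mst := MB + K + 1.
Let cMB : CO n Om := mkCO n Om (fun _ => MB) (cont_const n Om MB).
Let zC : CO n Om := mkCO n Om (fun _ => 0) (cont_const n Om 0).
Let zC2 : CO2 n Om := mkCO2 n Om (fun _ => 0) (cont2_const n Om 0).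

Variables (Lp Lf Mf mlow F0b r : R).
Hypotheses (HLp0 : 0 <= Lp)
  (HLp : forall (u v u' v' : CO n Om) (w w' : CO2 n Om),
    supn u <= Mst -> supn v <= Mst -> supn w <= Mst ->
    supn u' <= Mst -> supn v' <= Mst -> supn w' <= Mst ->
    supn (fun x => F u v w x - F u' v' w' x)
      <= Lp * (supn (fun x => u x - u' x) + supn (fun x => v x - v' x) + supn (fun p => w p - w' p)))
  (HLf0 : 0 <= Lf) (HLf : forall u v : CO n Om, supn (fun x => f u x - f v x) <= Lf * supn (fun x => u x - v x))
  (HMf : forall u x, 0 < f u x /\ f u x <= Mf)
  (Hmono : forall u v : CO n Om, (forall x, u x <= v x) -> forall x, f v x <= f u x)
  (Hml0 : 0 < mlow) (Hml : forall x, mlow <= f cMB x)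
  (HF0 : forall x, Rabs (F zC zC zC2 x) <= F0b) (HF0b : 0 <= F0b) (HMf0 : 0 <= Mf).

Let CF := F0b + Lp * (2 * MB + K).
Let LA := Rmax (Lphi alpha M0) CF.
Let ctau := 2 * Mf / mlow.
Let kap := 2 + (1 + LA) * K * Lf / mlow.

Hypotheses (Hr0 : 0 < r) (Hr1 : r <= 1) (HrCF : r * CF <= M - M0) (Hrk : r * (Lp * kap) <= 1 / 2).


Lemma phiB th x : - K <= th <= 0 -> Rabs (phi th x) <= MB.
Proof. intros H. apply Rle_trans with (Bphi alpha M0). apply (phi_bound n Om alpha HOm Halpha M0 phi tau0 Hphi Hnorm); auto. apply Rmax_r. Qed.

Lemma phiL th1 th2 x : - K <= th1 <= 0 -> - K <= th2 <= 0 -> Rabs (phi th1 x - phi th2 x) <= LA * Rabs (th1 - th2).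
Proof. intros H1 H2. eapply Rle_trans. apply (phi_lip n Om alpha HOm Halpha M0 phi tau0 Hphi Hnorm); auto. apply Rmult_le_compat_r. apply Rabs_pos. apply Rmax_l. Qed.

Lemma tau0M x : tau0 x <= M0.
Proof. apply (tau0_le n Om alpha HOm M0 phi tau0 Hnorm). Qed.

Lemma phi0M x : Rabs (phi 0 x) <= M0.
Proof.
  pose proof (w_bound n Om alpha HOm M0 phi tau0 Hphi Hnorm 0 x (Rle_refl 0)).
  rewrite Rabs_R0, Rmult_0_r, exp_0, Rmult_1_l in H. exact H.
Qed.

Lemma Kdef : K = M0 + 1.
Proof. reflexivity. Qed.

Lemma MB_pos : 0 < MB.
Proof. pose proof (Rmax_l M (Bphi alpha M0)). fold MB in H. lra. Qed.

Lemma CF_ge0 : 0 <= CF.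
Proof. unfold CF. pose proof MB_pos. rewrite Kdef. apply Rplus_le_le_0_compat; auto. apply Rmult_le_pos; lra. Qed.

Lemma LA_ge0 : 0 <= LA.
Proof. pose proof CF_ge0. unfold LA. eapply Rle_trans; [|apply Rmax_r]. auto. Qed.

Lemma LA_ge_CF : CF <= LA.
Proof. apply Rmax_r. Qed.

Lemma ctau_ge0 : 0 <= ctau.
Proof. unfold ctau. apply Rdiv_le_0_compat; lra. Qed.

Lemma rK : r + M0 <= K.
Proof. rewrite Kdef. lra. Qed.

Definition Good (a : R -> Pt Om -> R) :=
  (forall t, t <= 0 -> forall x, a t x = phi t x) /\
  (forall t, 0 <= t <= r -> forall x, Rabs (a t x) <= M) /\
  (forall t, - K <= t <= r -> contOm n Om (a t)) /\
  (forall s s' x, - K <= s <= r -> - K <= s' <= r -> Rabs (a s x - a s' x) <= LA * Rabs (s - s')).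

Lemma good_bound a t x : Good a -> - K <= t <= r -> Rabs (a t x) <= MB.
Proof.
  intros [G1 [G2 _]] Ht. destruct (Rle_dec t 0).
  - rewrite G1 by auto. apply phiB; lra.
  - eapply Rle_trans. apply G2; lra. apply Rmax_l.
Qed.

Lemma good_phi a t : Good a -> t <= 0 -> a t = cfun n Om (phi t).
Proof. intros [G1 _] Ht. apply functional_extensionality. intros x. apply G1; auto. Qed.

Lemma good_C a t x : Good a -> - K <= t <= r -> (@mkC n Om (a t)) x = a t x.
Proof. intros Hg Ht. apply mkC_val. apply Hg; auto. Qed.

Lemma good_C_neg a t : Good a -> t <= 0 -> (@mkC n Om (a t)) = phi t.
Proof. intros Hg Ht. rewrite (good_phi a t Hg Ht). apply mkC_co. Qed.

(* integrand of the threshold condition *)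
Definition hA (a : R -> Pt Om -> R) (x : Pt Om) (s : R) : R := f (@mkC n Om (a s)) x.
Definition hP (x : Pt Om) (s : R) : R := f (phi s) x.

Lemma hA_neg a x s : Good a -> s <= 0 -> hA a x s = hP x s.
Proof. intros Hg Hs. unfold hA, hP. rewrite good_C_neg; auto. Qed.

Lemma hA_low a x s : Good a -> - K <= s <= r -> mlow <= hA a x s.
Proof.
  intros Hg Hs. eapply Rle_trans. apply Hml. unfold hA. apply Hmono. intros y.
  rewrite good_C by auto. simpl. pose proof (good_bound a s y Hg Hs). pose proof (Rle_abs (a s y)). lra.
Qed.

Lemma hA_up a x s : Rabs (hA a x s) <= Mf.
Proof. unfold hA. destruct (HMf (mkC (a s)) x). rewrite Rabs_right; lra. Qed.

Lemma hA_lip a x s s' : Good a -> - K <= s <= r -> - K <= s' <= r ->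
  Rabs (hA a x s - hA a x s') <= (Lf * LA) * Rabs (s - s').
Proof.
  intros Hg Hs Hs'. unfold hA. rewrite Rmult_assoc. apply (f_est n Om HOm f Lf HLf); auto.
  apply Rmult_le_pos. apply LA_ge0. apply Rabs_pos.
  intros y. rewrite !good_C by auto. apply Hg; auto.
Qed.

Lemma hA_ExI a x : Good a -> ExI (hA a x) (- K) r.
Proof.
  intros Hg. apply ExI_cont. pose proof rK. pose proof (M0_nonneg n Om alpha M0 phi tau0 Hnorm). lra.
  apply (Lip_ContOn _ _ _ (Lf * LA)). intros; apply hA_lip; auto.
Qed.

Lemma hP_lip x s s' : - K <= s <= 0 -> - K <= s' <= 0 ->
  Rabs (hP x s - hP x s') <= (Lf * LA) * Rabs (s - s').
Proof.
  intros Hs Hs'. unfold hP. rewrite Rmult_assoc. apply (f_est n Om HOm f Lf HLf); auto.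
  apply Rmult_le_pos. apply LA_ge0. apply Rabs_pos.
  intros y. apply phiL; auto.
Qed.

Lemma hP_ExI x : ExI (hP x) (- K) 0.
Proof.
  apply ExI_cont. rewrite Kdef. pose proof (M0_nonneg n Om alpha M0 phi tau0 Hnorm). lra.
  apply (Lip_ContOn _ _ _ (Lf * LA)). intros; apply hP_lip; auto.
Qed.

Lemma hP_up x s : Rabs (hP x s) <= Mf.
Proof. unfold hP. destruct (HMf (phi s) x). rewrite Rabs_right; lra. Qed.

Definition Gx (x : Pt Om) : R := RI (hP x) (- tau0 x) 0.

Lemma Gx_eq a x : Good a -> RI (hA a x) (- tau0 x) 0 = Gx x.
Proof.
  intros Hg. unfold Gx, RI. apply RInt_ext. intros s Hs. apply hA_neg; auto.
  rewrite Rmax_right in Hs. lra. pose proof (Htau0 x). lra.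
Qed.

Lemma Gx_ge0 x : 0 <= Gx x.
Proof.
  unfold Gx. pose proof (Htau0 x). pose proof (tau0M x).
  apply Rle_trans with (0 * (0 - - tau0 x)). lra.
  apply RI_lower. lra. apply hP_ExI; rewrite Kdef; lra.
  intros s _. unfold hP. destruct (HMf (phi s) x); lra.
Qed.

Definition TauOK (a : R -> Pt Om -> R) t x tau :=
  0 <= tau <= t + tau0 x /\ RI (hA a x) (t - tau) t = Gx x.

Definition tauR (a : R -> Pt Om -> R) (t : R) (x : Pt Om) : R :=
  match excluded_middle_informative (exists tau, TauOK a t x tau) with
  | left H => proj1_sig (constructive_indefinite_description _ H)
  | right _ => 0
  end.

Lemma tauR_ok a t x : Good a -> 0 <= t <= r -> TauOK a t x (tauR a t x).
Proof.
  intros Hg Ht. unfold tauR. destruct excluded_middle_informative as [H|H].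
  { destruct constructive_indefinite_description as [tau Htau]. exact Htau. }
  exfalso. apply H.
  pose proof (Htau0 x) as H0. pose proof (tau0M x) as H1. pose proof rK as H2.
  set (T := t + tau0 x).
  assert (HT : 0 <= T) by (unfold T; lra).
  assert (HT2 : T <= t + M0) by (unfold T; lra).
  set (psi := fun z => RI (hA a x) (t - clamp 0 T z) t).
  assert (Hcl : forall z, 0 <= clamp 0 T z <= T) by (intros; apply clamp_in; auto).
  assert (Hpsi : forall z1 z2, Rabs (psi z1 - psi z2) <= Mf * Rabs (z1 - z2)).
  { intros z1 z2. unfold psi. pose proof (Hcl z1). pose proof (Hcl z2).
    rewrite (chasles (hA a x) (- K) r (t - clamp 0 T z1) (t - clamp 0 T z2) t) by (try apply hA_ExI; auto; lra).
    replace (RI (hA a x) (t - clamp 0 T z1) (t - clamp 0 T z2) + RI (hA a x) (t - clamp 0 T z2) t -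
      RI (hA a x) (t - clamp 0 T z2) t) with (RI (hA a x) (t - clamp 0 T z1) (t - clamp 0 T z2)) by ring.
    eapply Rle_trans. apply (int_bound _ (- K) r); try apply hA_ExI; auto; try lra.
    intros; apply hA_up. rewrite Rmult_comm. apply Rmult_le_compat_l. auto.
    replace (t - clamp 0 T z2 - (t - clamp 0 T z1)) with (clamp 0 T z1 - clamp 0 T z2) by ring.
    apply clamp_lip. }
  assert (Hc : continuity psi) by (apply (lip_continuity psi Mf); auto).
  assert (E0 : psi 0 = 0).
  { unfold psi. rewrite clamp_id by lra. replace (t - 0) with t by ring. apply RI_point. }
  assert (ET : Gx x <= psi T).
  { unfold psi. rewrite clamp_id by lra. unfold T. replace (t - (t + tau0 x)) with (- tau0 x) by ring.
    rewrite (chasles (hA a x) (- K) r (- tau0 x) 0 t) by (try apply hA_ExI; auto; lra).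
    rewrite Gx_eq by auto.
    assert (0 <= RI (hA a x) 0 t).
    { apply Rle_trans with (mlow * (t - 0)). apply Rmult_le_pos; lra.
      apply RI_lower. lra. apply hA_ExI; auto; lra. intros; apply hA_low; auto; lra. }
    lra. }
  destruct (IVT_gen psi 0 T (Gx x) Hc) as [z [Hz Ez]].
  { rewrite E0. pose proof (Gx_ge0 x). split.
    - apply Rle_trans with 0; [apply Rmin_l| auto].
    - apply Rle_trans with (psi T); [auto| apply Rmax_r]. }
  rewrite Rmin_left, Rmax_right in Hz by lra.
  exists z. split. unfold T in Hz. lra.
  unfold psi in Ez. rewrite clamp_id in Ez by lra. exact Ez.
Qed.

Lemma tauR_bounds a t x : Good a -> 0 <= t <= r -> 0 <= tauR a t x <= K /\ - K <= t - tauR a t x <= r.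
Proof.
  intros Hg Ht. destruct (tauR_ok a t x Hg Ht) as [[H1 H2] _].
  pose proof (tau0M x). pose proof rK. pose proof (Htau0 x). split; split; lra.
Qed.

Lemma tauR_lip a t t' x : Good a -> 0 <= t <= r -> 0 <= t' <= r ->
  Rabs (tauR a t x - tauR a t' x) <= ctau * Rabs (t - t').
Proof.
  intros Hg Ht Ht'. destruct (tauR_ok a t x Hg Ht) as [[H1 H2] E1].
  destruct (tauR_ok a t' x Hg Ht') as [[H1' H2'] E2].
  pose proof (tau0M x). pose proof rK. pose proof (Htau0 x).
  assert (P : mlow * Rabs (tauR a t x - tauR a t' x) <= 2 * Mf * Rabs (t - t')).
  { apply (tau_cmp2 (hA a x) (- K) r mlow Mf t t'); try apply hA_ExI; auto; try lra;
    try (intros; apply hA_low; auto; fail); try (intros; apply hA_up; fail); try (rewrite E1, E2; auto). }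
  unfold ctau. apply Rmult_le_reg_l with mlow; auto.
  replace (mlow * (2 * Mf / mlow * Rabs (t - t'))) with (2 * Mf * Rabs (t - t')) by (field; lra). auto.
Qed.


Lemma frac_le A e : 0 <= A -> 0 < e -> A * (e / (A + 1)) <= e.
Proof.
  intros HA He. apply Rle_trans with ((A + 1) * (e / (A + 1))).
  apply Rmult_le_compat_r. apply Rdiv_le_0_compat; lra. lra. right. field. lra.
Qed.

Lemma frac_pos A e : 0 <= A -> 0 < e -> 0 < e / (A + 1).
Proof. intros. apply Rdiv_lt_0_compat; lra. Qed.

Lemma M0nn : 0 <= M0.
Proof. lra. Qed.

Lemma Gx_cont : contOm n Om Gx.
Proof.
  intros x eps He.
  assert (HK : 0 <= K) by (rewrite Kdef; lra).
  assert (He3 : 0 < eps / 3) by lra.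
  destruct (equi n Om (fun s y => hP y s) (- K) 0 (Lf * LA)) with (x := x) (eps := eps / 3 / (K + 1))
    as [d1 [Hd1 Hx1]].
  - lra.
  - apply Rmult_le_pos; auto. apply LA_ge0.
  - intros s _. unfold hP. apply ccont.
  - intros s s' y Hs Hs'. apply hP_lip; auto.
  - apply frac_pos; auto.
  - destruct (ccont n Om tau0 x (eps / 3 / (Mf + 1)) (frac_pos Mf _ HMf0 He3)) as [d2 [Hd2 Hx2]].
    exists (Rmin d1 d2). split. apply Rmin_glb_lt; auto. intros y Hy.
    specialize (Hx1 y (Rlt_le_trans _ _ _ Hy (Rmin_l _ _))).
    specialize (Hx2 y (Rlt_le_trans _ _ _ Hy (Rmin_r _ _))).
    pose proof (Htau0 x). pose proof (Htau0 y). pose proof (tau0M x). pose proof (tau0M y).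
    unfold Gx.
    rewrite (chasles (hP x) (- K) 0 (- tau0 x) (- tau0 y) 0) by (try apply hP_ExI; rewrite Kdef; lra).
    assert (B1 : Rabs (RI (hP x) (- tau0 x) (- tau0 y)) <= Rabs (- tau0 y - - tau0 x) * Mf).
    { apply (int_bound _ (- K) 0); try apply hP_ExI; try (rewrite Kdef; lra). intros; apply hP_up. }
    assert (B2 : Rabs (RI (hP x) (- tau0 y) 0 - RI (hP y) (- tau0 y) 0) <= Rabs (0 - - tau0 y) * (eps / 3 / (K + 1))).
    { apply (int_diff _ _ (- K) 0); try apply hP_ExI; try (rewrite Kdef; lra). intros s Hs. left. apply Hx1. auto. }
    replace (- tau0 y - - tau0 x) with (- (tau0 y - tau0 x)) in B1 by ring. rewrite Rabs_Ropp, Rabs_minus_sym in B1.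
    replace (0 - - tau0 y) with (tau0 y) in B2 by ring. rewrite (Rabs_right (tau0 y)) in B2 by lra.
    assert (P1 : Rabs (tau0 x - tau0 y) * Mf <= eps / 3).
    { rewrite Rmult_comm. apply Rle_trans with (Mf * (eps / 3 / (Mf + 1))).
      apply Rmult_le_compat_l; auto. left; auto. apply frac_le; auto. }
    assert (P2 : tau0 y * (eps / 3 / (K + 1)) <= eps / 3).
    { apply Rle_trans with (K * (eps / 3 / (K + 1))). apply Rmult_le_compat_r. left; apply frac_pos; auto.
      rewrite Kdef; lra. apply frac_le; auto. }
    pose proof (Rabs_triang (RI (hP x) (- tau0 x) (- tau0 y)) (RI (hP x) (- tau0 y) 0 - RI (hP y) (- tau0 y) 0)).
    replace (RI (hP x) (- tau0 x) (- tau0 y) + RI (hP x) (- tau0 y) 0 - RI (hP y) (- tau0 y) 0)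
      with (RI (hP x) (- tau0 x) (- tau0 y) + (RI (hP x) (- tau0 y) 0 - RI (hP y) (- tau0 y) 0)) by ring.
    lra.
Qed.

Lemma tauR_cont a t : Good a -> 0 <= t <= r -> contOm n Om (tauR a t).
Proof.
  intros Hg Ht x eps He.
  assert (HK : 0 <= K) by (rewrite Kdef; lra).
  assert (He3 : 0 < mlow * eps / 3) by (apply Rdiv_lt_0_compat; [apply Rmult_lt_0_compat|]; lra).
  destruct (equi n Om (fun s y => hA a y s) (- K) r (Lf * LA)) with (x := x) (eps := mlow * eps / 3 / (K + 1))
    as [d1 [Hd1 Hx1]].
  - rewrite Kdef; lra.
  - apply Rmult_le_pos; auto. apply LA_ge0.
  - intros s _. unfold hA. apply ccont.
  - intros s s' y Hs Hs'. apply hA_lip; auto.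
  - apply frac_pos; auto.
  - destruct (Gx_cont x _ He3) as [d2 [Hd2 Hx2]].
    exists (Rmin d1 d2). split. apply Rmin_glb_lt; auto. intros y Hy.
    specialize (Hx1 y (Rlt_le_trans _ _ _ Hy (Rmin_l _ _))).
    specialize (Hx2 y (Rlt_le_trans _ _ _ Hy (Rmin_r _ _))).
    destruct (tauR_ok a t x Hg Ht) as [_ E1]. destruct (tauR_ok a t y Hg Ht) as [_ E2].
    destruct (tauR_bounds a t x Hg Ht) as [[T1 T2] [T3 T4]]. destruct (tauR_bounds a t y Hg Ht) as [[T5 T6] [T7 T8]].
    assert (P : mlow * Rabs (tauR a t x - tauR a t y) <= Rabs (Gx x - Gx y) + tauR a t y * (mlow * eps / 3 / (K + 1))).
    { apply (tau_cmp1 (hA a x) (hA a y) (- K) r mlow _ t); try apply hA_ExI; auto; try lra.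
      intros; apply hA_low; auto. intros s Hs. left. apply Hx1. auto. }
    assert (P2 : tauR a t y * (mlow * eps / 3 / (K + 1)) <= mlow * eps / 3).
    { apply Rle_trans with (K * (mlow * eps / 3 / (K + 1))). apply Rmult_le_compat_r. left; apply frac_pos; auto.
      auto. apply frac_le; auto. }
    apply Rmult_lt_reg_l with mlow; auto. lra.
Qed.

Definition Dr (a : R -> Pt Om -> R) (l : R) (p : Pt Om * Pt Om) : R := a (l - tauR a l (fst p)) (snd p).

Lemma D_cont a l : Good a -> 0 <= l <= r -> contOm2 n Om (Dr a l).
Proof.
  intros Hg Hl [x y] eps He. simpl.
  pose proof LA_ge0 as HLA.
  assert (He2 : 0 < eps / 2) by lra.
  destruct (tauR_cont a l Hg Hl x (eps / 2 / (LA + 1)) (frac_pos _ _ HLA He2)) as [d1 [Hd1 Hx1]].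
  destruct (equi n Om a (- K) r LA) with (x := y) (eps := eps / 2) as [d2 [Hd2 Hx2]]; auto.
  rewrite Kdef; lra. apply Hg. apply Hg.
  exists (Rmin d1 d2). split. apply Rmin_glb_lt; auto. intros [x' y'] Hx Hy. simpl in *. unfold Dr. simpl.
  specialize (Hx1 x' (Rlt_le_trans _ _ _ Hx (Rmin_l _ _))).
  specialize (Hx2 y' (Rlt_le_trans _ _ _ Hy (Rmin_r _ _))).
  destruct (tauR_bounds a l x Hg Hl) as [_ B1]. destruct (tauR_bounds a l x' Hg Hl) as [_ B2].
  specialize (Hx2 (l - tauR a l x') B2).
  assert (L1 : Rabs (a (l - tauR a l x) y - a (l - tauR a l x') y) <= LA * Rabs (tauR a l x - tauR a l x')).
  { replace (tauR a l x - tauR a l x') with (- ((l - tauR a l x) - (l - tauR a l x'))) by ring.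
    rewrite Rabs_Ropp. apply Hg; auto. }
  assert (L2 : LA * Rabs (tauR a l x - tauR a l x') <= eps / 2).
  { apply Rle_trans with (LA * (eps / 2 / (LA + 1))). apply Rmult_le_compat_l; auto. left; auto. apply frac_le; auto. }
  replace (a (l - tauR a l x) y - a (l - tauR a l x') y') with
    ((a (l - tauR a l x) y - a (l - tauR a l x') y) + (a (l - tauR a l x') y - a (l - tauR a l x') y')) by ring.
  eapply Rle_lt_trans. apply Rabs_triang. lra.
Qed.

Definition gA (a : R -> Pt Om -> R) (l : R) : CO n Om :=
  F (@mkC n Om (a l)) (@mkC n Om (tauR a l)) (@mkC2 n Om (Dr a l)).

Lemma Mst_ge : MB <= Mst /\ K <= Mst /\ 0 <= Mst.
Proof. pose proof MB_pos. unfold Mst. rewrite Kdef. lra. Qed.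

Lemma args_bounds a l : Good a -> 0 <= l <= r ->
  (forall x, Rabs ((@mkC n Om (a l)) x) <= Mst) /\ (forall x, Rabs ((@mkC n Om (tauR a l)) x) <= Mst) /\
  (forall p, Rabs ((@mkC2 n Om (Dr a l)) p) <= Mst).
Proof.
  intros Hg Hl. destruct Mst_ge as [H1 [H2 H3]]. pose proof rK. pose proof M0nn. split; [|split].
  - intros x. rewrite good_C by (auto; rewrite Kdef; lra). eapply Rle_trans; [|apply H1]. apply good_bound; auto. rewrite Kdef; lra.
  - intros x. rewrite mkC_val by (apply tauR_cont; auto). destruct (tauR_bounds a l x Hg Hl) as [[B1 B2] _].
    rewrite Rabs_right by lra. lra.
  - intros p. rewrite mkC2_val by (apply D_cont; auto). unfold Dr. destruct (tauR_bounds a l (fst p) Hg Hl) as [_ B].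
    eapply Rle_trans; [|apply H1]. apply good_bound; auto.
Qed.

Lemma gA_bound a l x : Good a -> 0 <= l <= r -> Rabs (gA a l x) <= CF.
Proof.
  intros Hg Hl. destruct (args_bounds a l Hg Hl) as [A1 [A2 A3]]. destruct Mst_ge as [H1 [H2 H3]].
  pose proof MB_pos. pose proof rK. pose proof M0nn.
  assert (E : Rabs (gA a l x - F zC zC zC2 x) <= Lp * (MB + K + MB)).
  { unfold gA. apply (F_est n Om HOm F Mst Lp HLp); auto; try lra; try (intros; simpl; rewrite Rabs_R0; lra).
    - intros y. simpl. rewrite Rminus_0_r. rewrite good_C by (auto; rewrite Kdef; lra). apply good_bound; auto. rewrite Kdef; lra.
    - intros y. simpl. rewrite Rminus_0_r. rewrite mkC_val by (apply tauR_cont; auto).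
      destruct (tauR_bounds a l y Hg Hl) as [[B1 B2] _]. rewrite Rabs_right by lra. lra.
    - intros p. simpl. rewrite Rminus_0_r. rewrite mkC2_val by (apply D_cont; auto). unfold Dr.
      destruct (tauR_bounds a l (fst p) Hg Hl) as [_ B]. apply good_bound; auto. }
  pose proof (HF0 x) as T0. pose proof (Rabs_triang (gA a l x - F zC zC zC2 x) (F zC zC zC2 x)) as T1.
  replace (gA a l x - F zC zC zC2 x + F zC zC zC2 x) with (gA a l x) in T1 by ring.
  replace (Lp * (MB + K + MB)) with (Lp * (2 * MB + K)) in E by ring.
  unfold CF. lra.
Qed.

Let Lg := Lp * (LA + ctau + LA * (1 + ctau)).

Lemma Lg_ge0 : 0 <= Lg.
Proof. pose proof LA_ge0. pose proof ctau_ge0. unfold Lg. apply Rmult_le_pos; auto. nra. Qed.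

Lemma gA_lip a l l' x : Good a -> 0 <= l <= r -> 0 <= l' <= r -> Rabs (gA a l x - gA a l' x) <= Lg * Rabs (l - l').
Proof.
  intros Hg Hl Hl'. destruct (args_bounds a l Hg Hl) as [A1 [A2 A3]]. destruct (args_bounds a l' Hg Hl') as [A1' [A2' A3']].
  destruct Mst_ge as [H1 [H2 H3]]. pose proof LA_ge0. pose proof ctau_ge0. pose proof (Rabs_pos (l - l')). pose proof rK. pose proof M0nn.
  unfold Lg. rewrite Rmult_assoc, !Rmult_plus_distr_r.
  unfold gA. apply (F_est n Om HOm F Mst Lp HLp); auto; try (apply Rmult_le_pos; auto; try lra; nra).
  - intros y. rewrite !good_C by (auto; rewrite Kdef; lra). apply Hg; rewrite Kdef; lra.
  - intros y. rewrite !mkC_val by (apply tauR_cont; auto). apply tauR_lip; auto.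
  - intros p. rewrite !mkC2_val by (apply D_cont; auto). unfold Dr.
    destruct (tauR_bounds a l (fst p) Hg Hl) as [_ B]. destruct (tauR_bounds a l' (fst p) Hg Hl') as [_ B'].
    eapply Rle_trans. apply Hg; auto. rewrite Rmult_assoc. apply Rmult_le_compat_l; auto.
    replace (l - tauR a l (fst p) - (l' - tauR a l' (fst p))) with ((l - l') - (tauR a l (fst p) - tauR a l' (fst p))) by ring.
    eapply Rle_trans. apply Rabs_triang. rewrite Rabs_Ropp. pose proof (tauR_lip a l l' (fst p) Hg Hl Hl'). lra.
Qed.

Lemma gA_ExI a x : Good a -> ExI (fun l => gA a l x) 0 r.
Proof.
  intros Hg. apply ExI_cont. lra. apply (Lip_ContOn _ _ _ Lg). intros; apply gA_lip; auto.
Qed.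

Lemma gA_diff a b e l x : Good a -> Good b -> 0 <= e ->
  (forall t y, 0 <= t <= r -> Rabs (a t y - b t y) <= e) -> 0 <= l <= r ->
  Rabs (gA a l x - gA b l x) <= Lp * kap * e.
Proof.
  intros Ha Hb He Hab Hl.
  destruct (args_bounds a l Ha Hl) as [A1 [A2 A3]]. destruct (args_bounds b l Hb Hl) as [A1' [A2' A3']].
  destruct Mst_ge as [H1 [H2 H3]]. pose proof LA_ge0. pose proof rK. pose proof M0nn.
  assert (HK : 0 <= K) by (rewrite Kdef; lra).
  assert (Hab' : forall s y, - K <= s <= r -> Rabs ((@mkC n Om (a s)) y - (@mkC n Om (b s)) y) <= e).
  { intros s y Hs. rewrite !good_C by auto. destruct (Rle_dec s 0).
    - destruct Ha as [Ga _]. destruct Hb as [Gb _]. rewrite Ga, Gb by auto. rewrite Rminus_diag, Rabs_R0. auto.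
    - apply Hab. lra. }
  set (dt := K * Lf * e / mlow).
  assert (Hdt0 : 0 <= dt) by (unfold dt; apply Rdiv_le_0_compat; [apply Rmult_le_pos; [apply Rmult_le_pos|]|]; auto).
  assert (Htau : forall y, Rabs (tauR a l y - tauR b l y) <= dt).
  { intros y. destruct (tauR_ok a l y Ha Hl) as [_ E1]. destruct (tauR_ok b l y Hb Hl) as [_ E2].
    destruct (tauR_bounds a l y Ha Hl) as [[T1 T2] [T3 T4]]. destruct (tauR_bounds b l y Hb Hl) as [[T5 T6] [T7 T8]].
    assert (P : mlow * Rabs (tauR a l y - tauR b l y) <= Rabs (Gx y - Gx y) + tauR b l y * (Lf * e)).
    { apply (tau_cmp1 (hA a y) (hA b y) (- K) r mlow _ l); try apply hA_ExI; auto; try lra.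
      intros; apply hA_low; auto. intros s Hs. unfold hA. apply (f_est n Om HOm f Lf HLf); auto. }
    rewrite Rminus_diag, Rabs_R0 in P.
    assert (tauR b l y * (Lf * e) <= K * (Lf * e)) by (apply Rmult_le_compat_r; auto; apply Rmult_le_pos; auto).
    unfold dt. apply Rmult_le_reg_l with mlow; auto. replace (mlow * (K * Lf * e / mlow)) with (K * (Lf * e)) by (field; lra). lra. }
  replace (Lp * kap * e) with (Lp * (e + dt + (LA * dt + e))) by (unfold kap, dt; field; lra).
  unfold gA. apply (F_est n Om HOm F Mst Lp HLp); auto; try lra.
  - apply Rplus_le_le_0_compat; auto. apply Rmult_le_pos; auto.
  - intros y. apply Hab'. rewrite Kdef; lra.
  - intros y. rewrite !mkC_val by (apply tauR_cont; auto). apply Htau.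
  - intros p. rewrite !mkC2_val by (apply D_cont; auto). unfold Dr.
    destruct (tauR_bounds a l (fst p) Ha Hl) as [_ B]. destruct (tauR_bounds b l (fst p) Hb Hl) as [_ B'].
    replace (a (l - tauR a l (fst p)) (snd p) - b (l - tauR b l (fst p)) (snd p)) with
      ((a (l - tauR a l (fst p)) (snd p) - a (l - tauR b l (fst p)) (snd p)) +
       (a (l - tauR b l (fst p)) (snd p) - b (l - tauR b l (fst p)) (snd p))) by ring.
    eapply Rle_trans. apply Rabs_triang. apply Rplus_le_compat.
    + eapply Rle_trans. apply Ha; auto. apply Rmult_le_compat_l; auto.
      replace (l - tauR a l (fst p) - (l - tauR b l (fst p))) with (- (tauR a l (fst p) - tauR b l (fst p))) by ring.
      rewrite Rabs_Ropp. apply Htau.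
    + specialize (Hab' (l - tauR b l (fst p)) (snd p) B'). rewrite !good_C in Hab' by auto. auto.
Qed.


Definition T (a : R -> Pt Om -> R) (t : R) (x : Pt Om) : R :=
  if Rle_dec t 0 then phi t x else phi 0 x + RI (fun l => gA a l x) 0 (Rmin t r).

Lemma T_neg a t x : t <= 0 -> T a t x = phi t x.
Proof. intros H. unfold T. destruct Rle_dec; [reflexivity| lra]. Qed.

Lemma T_pos a t x : 0 <= t <= r -> T a t x = phi 0 x + RI (fun l => gA a l x) 0 t.
Proof.
  intros H. unfold T. destruct Rle_dec.
  - assert (t = 0) by lra. subst. rewrite RI_point. ring.
  - rewrite Rmin_left by lra. reflexivity.
Qed.

Lemma contOm_ext (u v : Pt Om -> R) : (forall x, u x = v x) -> contOm n Om v -> contOm n Om u.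
Proof. intros E H p eps He. destruct (H p eps He) as [d [Hd Hq]]. exists d. split; auto. intros q Hq'. rewrite !E. auto. Qed.

Lemma cont_plus (u v : Pt Om -> R) : contOm n Om u -> contOm n Om v -> contOm n Om (fun x => u x + v x).
Proof.
  intros Hu Hv. apply contOm_ext with (v := fun x => u x - (- 1 * v x)). intros; ring.
  apply cont_minus; auto. apply cont_scal; auto.
Qed.

Lemma int_cont a t : Good a -> 0 <= t <= r -> contOm n Om (fun x => RI (fun l => gA a l x) 0 t).
Proof.
  intros Hg Ht x eps He.
  destruct (equi n Om (fun l y => gA a l y) 0 r Lg) with (x := x) (eps := eps / 2 / (r + 1)) as [d [Hd Hx]].
  lra. apply Lg_ge0. intros; apply ccont. intros; apply gA_lip; auto. apply frac_pos; lra.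
  exists d. split; auto. intros y Hy.
  eapply Rle_lt_trans. apply (int_diff _ _ 0 r 0 t (eps / 2 / (r + 1))); try apply gA_ExI; auto; try lra.
  intros s Hs. left. apply Hx; auto.
  replace (t - 0) with t by ring. rewrite Rabs_right by lra.
  apply Rle_lt_trans with (r * (eps / 2 / (r + 1))). apply Rmult_le_compat_r. left; apply frac_pos; lra. lra.
  pose proof (frac_le r (eps / 2) ltac:(lra) ltac:(lra)). lra.
Qed.

Lemma T_good a : Good a -> Good (T a).
Proof.
  intros Hg. pose proof LA_ge0. pose proof CF_ge0. pose proof LA_ge_CF. pose proof rK. pose proof M0nn.
  assert (HI : forall t x, 0 <= t <= r -> Rabs (RI (fun l => gA a l x) 0 t) <= CF * t).
  { intros t x Ht. eapply Rle_trans. apply (int_bound _ 0 r 0 t CF); try apply gA_ExI; auto; try lra.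
    intros; apply gA_bound; auto. rewrite Rminus_0_r, Rabs_right by lra. lra. }
  split; [|split; [|split]].
  - intros t Ht x. apply T_neg; auto.
  - intros t Ht x. rewrite T_pos by auto. eapply Rle_trans. apply Rabs_triang.
    pose proof (phi0M x). pose proof (HI t x Ht).
    assert (CF * t <= CF * r) by (apply Rmult_le_compat_l; lra). lra.
  - intros t Ht. destruct (Rle_dec t 0).
    + apply contOm_ext with (v := phi t). intros; apply T_neg; auto. apply ccont.
    + apply contOm_ext with (v := fun x => phi 0 x + RI (fun l => gA a l x) 0 t). intros; apply T_pos; lra.
      apply cont_plus. apply ccont. apply int_cont; auto; lra.
  - assert (Hpos : forall s s' x, 0 <= s <= r -> 0 <= s' <= r -> Rabs (T a s x - T a s' x) <= LA * Rabs (s - s')).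
    { intros s s' x Hs Hs'. rewrite !T_pos by auto.
      replace (phi 0 x + RI (fun l => gA a l x) 0 s - (phi 0 x + RI (fun l => gA a l x) 0 s'))
        with (RI (fun l => gA a l x) s' s).
      eapply Rle_trans. apply (int_bound _ 0 r s' s CF); try apply gA_ExI; auto. intros; apply gA_bound; auto.
      rewrite Rmult_comm, Rabs_minus_sym. apply Rmult_le_compat_r; auto. apply Rabs_pos.
      rewrite (chasles _ 0 r 0 s' s) by (try apply gA_ExI; auto; lra). ring. }
    assert (Hneg : forall s s' x, - K <= s <= 0 -> - K <= s' <= 0 -> Rabs (T a s x - T a s' x) <= LA * Rabs (s - s')).
    { intros s s' x Hs Hs'. rewrite !T_neg by lra. apply phiL; auto. }
    intros s s' x Hs Hs'.
    destruct (Rle_dec s 0) as [h1|h1]; destruct (Rle_dec s' 0) as [h2|h2].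
    + apply Hneg; lra.
    + replace (T a s x - T a s' x) with ((T a s x - T a 0 x) + (T a 0 x - T a s' x)) by ring.
      eapply Rle_trans. apply Rabs_triang.
      pose proof (Hneg s 0 x ltac:(lra) ltac:(lra)). pose proof (Hpos 0 s' x ltac:(lra) ltac:(lra)).
      rewrite Rminus_0_r in H4. rewrite Rminus_0_l, Rabs_Ropp in H5.
      rewrite (Rabs_left1 s) in H4 by lra. rewrite (Rabs_right s') in H5 by lra.
      rewrite (Rabs_left1 (s - s')) by lra. lra.
    + replace (T a s x - T a s' x) with ((T a s x - T a 0 x) + (T a 0 x - T a s' x)) by ring.
      eapply Rle_trans. apply Rabs_triang.
      pose proof (Hpos s 0 x ltac:(lra) ltac:(lra)). pose proof (Hneg 0 s' x ltac:(lra) ltac:(lra)).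
      rewrite Rminus_0_r in H4. rewrite Rminus_0_l, Rabs_Ropp in H5.
      rewrite (Rabs_right s) in H4 by lra. rewrite (Rabs_left1 s') in H5 by lra.
      rewrite (Rabs_right (s - s')) by lra. lra.
    + apply Hpos; lra.
Qed.

Lemma T_contr a b e : Good a -> Good b -> 0 <= e ->
  (forall t y, 0 <= t <= r -> Rabs (a t y - b t y) <= e) ->
  forall t x, 0 <= t <= r -> Rabs (T a t x - T b t x) <= e / 2.
Proof.
  intros Ha Hb He Hab t x Ht. rewrite !T_pos by auto.
  replace (phi 0 x + RI (fun l => gA a l x) 0 t - (phi 0 x + RI (fun l => gA b l x) 0 t))
    with (RI (fun l => gA a l x) 0 t - RI (fun l => gA b l x) 0 t) by ring.
  eapply Rle_trans. apply (int_diff _ _ 0 r 0 t (Lp * kap * e)); try apply gA_ExI; auto; try lra.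
  intros; apply gA_diff; auto.
  rewrite Rminus_0_r, Rabs_right by lra.
  assert (Hk : 0 <= Lp * kap).
  { apply Rmult_le_pos; auto. unfold kap. pose proof LA_ge0. assert (0 <= K) by (rewrite Kdef; lra).
    assert (0 <= (1 + LA) * K * Lf / mlow) by (apply Rdiv_le_0_compat; auto; apply Rmult_le_pos; [apply Rmult_le_pos|]; lra). lra. }
  assert (t * (Lp * kap * e) <= r * (Lp * kap) * e).
  { rewrite <- Rmult_assoc. apply Rmult_le_compat_r; auto. apply Rmult_le_compat_r; auto; lra. }
  assert (r * (Lp * kap) * e <= 1 / 2 * e) by (apply Rmult_le_compat_r; auto). lra.
Qed.


Definition it0 (t : R) (x : Pt Om) : R := phi (Rmin t 0) x.

Fixpoint it (k : nat) : R -> Pt Om -> R :=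
  match k with O => it0 | S k => T (it k) end.

Definition Bk (k : nat) : R := 4 * M * (/ 2) ^ k.

Lemma Bk_pos k : 0 <= Bk k.
Proof. unfold Bk. apply Rmult_le_pos. lra. apply pow_le. lra. Qed.

Lemma Bk_S k : Bk (S k) = Bk k / 2.
Proof. unfold Bk. simpl. field. Qed.

Lemma Bk_small c : 0 < c -> exists k, Bk k < c.
Proof.
  intros Hc. destruct (pow_lt_1_zero (/ 2) ltac:(rewrite Rabs_right; lra) (c / (4 * M))) as [N HN].
  apply Rdiv_lt_0_compat; lra.
  exists N. specialize (HN N (le_n N)). rewrite Rabs_right in HN by (apply Rle_ge, pow_le; lra).
  unfold Bk. apply Rmult_lt_compat_l with (r := 4 * M) in HN; [|lra].
  replace (4 * M * (c / (4 * M))) with c in HN by (field; lra). lra.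
Qed.

Lemma Bk_lim X Y : (forall k, X <= Y + Bk k) -> X <= Y.
Proof.
  intros H. destruct (Rle_dec X Y) as [h|h]; auto.
  destruct (Bk_small (X - Y)) as [k Hk]. lra. specialize (H k). lra.
Qed.

Lemma Bk_lim2 X Y : (forall k, X <= Y + 2 * Bk k) -> X <= Y.
Proof. intros H. apply Bk_lim. intros k. specialize (H (S k)). rewrite Bk_S in H. lra. Qed.

Lemma good_it0 : Good it0.
Proof.
  pose proof LA_ge0. pose proof M0nn. assert (0 <= K) by (rewrite Kdef; lra). split; [|split; [|split]].
  - intros t Ht x. unfold it0. rewrite Rmin_left by auto. reflexivity.
  - intros t Ht x. unfold it0. rewrite Rmin_right by lra. pose proof (phi0M x). lra.
  - intros t Ht. apply ccont.
  - intros s s' x Hs Hs'. unfold it0. eapply Rle_trans. apply phiL.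
    split. apply Rmin_glb; lra. apply Rmin_r. split. apply Rmin_glb; lra. apply Rmin_r.
    apply Rmult_le_compat_l; auto. unfold Rmin; repeat destruct Rle_dec; unfold Rabs; repeat destruct Rcase_abs; lra.
Qed.

Lemma good_it k : Good (it k).
Proof. induction k; simpl. apply good_it0. apply T_good; auto. Qed.

Lemma it_step k t y : 0 <= t <= r -> Rabs (it (S k) t y - it k t y) <= Bk k / 2.
Proof.
  revert t y. induction k; intros t y Ht.
  - unfold Bk. simpl. destruct (good_it 1) as [_ [G1 _]]. destruct (good_it 0) as [_ [G0 _]].
    specialize (G1 t Ht y). specialize (G0 t Ht y). simpl in G1, G0.
    eapply Rle_trans. apply Rabs_triang. rewrite Rabs_Ropp. lra.
  - change (it (S (S k)) t y) with (T (it (S k)) t y). change (it (S k) t y) with (T (it k) t y).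
    rewrite Bk_S. replace (Bk k / 2 / 2) with ((Bk k / 2) / 2) by ring.
    apply T_contr; auto using good_it. pose proof (Bk_pos k). lra.
Qed.

Lemma it_cauchy k j t y : 0 <= t <= r -> Rabs (it (k + j) t y - it k t y) <= Bk k - Bk (k + j).
Proof.
  intros Ht. induction j.
  - rewrite Nat.add_0_r, !Rminus_diag, Rabs_R0. lra.
  - replace (k + S j)%nat with (S (k + j)) by lia.
    replace (it (S (k + j)) t y - it k t y) with ((it (S (k + j)) t y - it (k + j) t y) + (it (k + j) t y - it k t y)) by ring.
    eapply Rle_trans. apply Rabs_triang. pose proof (it_step (k + j) t y Ht). rewrite Bk_S. lra.
Qed.

Lemma it_close k m t y : (k <= m)%nat -> 0 <= t <= r -> Rabs (it m t y - it k t y) <= Bk k.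
Proof.
  intros Hkm Ht. replace m with (k + (m - k))%nat by lia. eapply Rle_trans. apply it_cauchy; auto.
  pose proof (Bk_pos (k + (m - k))). lra.
Qed.

Lemma it_Cauchy t y : 0 <= t <= r -> Cauchy_crit (fun k => it k t y).
Proof.
  intros Ht eps He. destruct (Bk_small (eps / 2)) as [N HN]. lra. exists N. intros a b Ha Hb. unfold Rdist.
  replace (it a t y - it b t y) with ((it a t y - it N t y) - (it b t y - it N t y)) by ring.
  eapply Rle_lt_trans. apply Rabs_triang. rewrite Rabs_Ropp.
  pose proof (it_close N a t y Ha Ht). pose proof (it_close N b t y Hb Ht). lra.
Qed.

Definition alim (t : R) (x : Pt Om) : R :=
  if Rle_dec t 0 then phi t x else
  match excluded_middle_informative (exists l, Un_cv (fun k => it k t x) l) with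
  | left H => proj1_sig (constructive_indefinite_description _ H)
  | right _ => 0
  end.

Lemma alim_close k t y : t <= r -> Rabs (it k t y - alim t y) <= Bk k.
Proof.
  intros Ht. unfold alim. destruct Rle_dec as [h|h].
  - destruct (good_it k) as [G1 _]. rewrite G1 by auto. rewrite Rminus_diag, Rabs_R0. apply Bk_pos.
  - destruct excluded_middle_informative as [H|H].
    + destruct constructive_indefinite_description as [l Hl]. simpl.
      apply Rnot_lt_le. intros Hlt.
      destruct (Hl (Rabs (it k t y - l) - Bk k)) as [N HN]. lra.
      specialize (HN (Nat.max N k) (Nat.le_max_l N k)). unfold Rdist in HN.
      pose proof (it_close k (Nat.max N k) t y (Nat.le_max_r N k) ltac:(lra)).
      pose proof (Rabs_triang (it k t y - it (Nat.max N k) t y) (it (Nat.max N k) t y - l)).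
      replace (it k t y - it (Nat.max N k) t y + (it (Nat.max N k) t y - l)) with (it k t y - l) in H1 by ring.
      rewrite Rabs_minus_sym in H0. lra.
    + exfalso. apply H. destruct (R_complete _ (it_Cauchy t y ltac:(lra))) as [l Hl]. exists l. auto.
Qed.

Lemma good_alim : Good alim.
Proof.
  split; [|split; [|split]].
  - intros t Ht x. unfold alim. destruct Rle_dec; [reflexivity| lra].
  - intros t Ht x. apply Bk_lim. intros k. destruct (good_it k) as [_ [G2 _]].
    pose proof (G2 t Ht x). pose proof (alim_close k t x ltac:(lra)).
    pose proof (Rabs_triang_inv (alim t x) (it k t x)). rewrite Rabs_minus_sym in H0. lra.
  - intros t Ht. destruct (Rle_dec t 0) as [h|h].
    + apply contOm_ext with (v := phi t). intros; unfold alim; destruct Rle_dec; [reflexivity| lra]. apply ccont.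
    + intros x eps He. destruct (Bk_small (eps / 3)) as [k Hk]. lra.
      destruct (good_it k) as [_ [_ [G3 _]]]. destruct (G3 t Ht x (eps / 3)) as [d [Hd Hx]]. lra.
      exists d. split; auto. intros y Hy. specialize (Hx y Hy).
      pose proof (alim_close k t x ltac:(lra)). pose proof (alim_close k t y ltac:(lra)).
      replace (alim t x - alim t y) with (- (it k t x - alim t x) + (it k t x - it k t y) + (it k t y - alim t y)) by ring.
      eapply Rle_lt_trans. apply Rabs_triang. eapply Rle_lt_trans. apply Rplus_le_compat_r. apply Rabs_triang.
      rewrite Rabs_Ropp. lra.
  - intros s s' x Hs Hs'. apply Bk_lim2. intros k.
    destruct (good_it k) as [_ [_ [_ G4]]]. specialize (G4 s s' x Hs Hs').
    pose proof (alim_close k s x ltac:(lra)). pose proof (alim_close k s' x ltac:(lra)).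
    replace (alim s x - alim s' x) with (- (it k s x - alim s x) + (it k s x - it k s' x) + (it k s' x - alim s' x)) by ring.
    eapply Rle_trans. apply Rabs_triang. eapply Rle_trans. apply Rplus_le_compat_r. apply Rabs_triang.
    rewrite Rabs_Ropp. lra.
Qed.

Lemma fix_alim t x : 0 <= t <= r -> T alim t x = alim t x.
Proof.
  intros Ht. assert (Rabs (T alim t x - alim t x) <= 0).
  { apply Bk_lim. intros k.
    pose proof (T_contr alim (it k) (Bk k) good_alim (good_it k) (Bk_pos k)) as C.
    assert (C' : Rabs (T alim t x - T (it k) t x) <= Bk k / 2).
    { apply C; auto. intros t' y Ht'. rewrite Rabs_minus_sym. apply alim_close. lra. }
    pose proof (alim_close (S k) t x ltac:(lra)) as D. simpl in D. rewrite Bk_S in D.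
    replace (T alim t x - alim t x) with ((T alim t x - T (it k) t x) + (T (it k) t x - alim t x)) by ring.
    eapply Rle_trans. apply Rabs_triang. lra. }
  pose proof (Rabs_pos (T alim t x - alim t x)). assert (Rabs (T alim t x - alim t x) = 0) by lra.
  apply Rabs_eq_0 in H1. lra.
Qed.


Theorem exist_sol : exists A tau, is_solution F f phi tau0 r A tau /\ forall t, 0 <= t <= r -> supn (A t) <= M.
Proof.
  pose proof good_alim as Hg. pose proof LA_ge0 as HLA. pose proof ctau_ge0 as Hct. pose proof rK. pose proof M0nn.
  assert (HK : 1 <= K) by (rewrite Kdef; lra).
  set (A := fun t => @mkC n Om (alim t)). set (tau := fun t => @mkC n Om (tauR alim t)).
  assert (Aval : forall t x, - K <= t <= r -> A t x = alim t x) by (intros; apply good_C; auto).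
  assert (Aneg : forall t, t <= 0 -> A t = phi t) by (intros; apply good_C_neg; auto).
  assert (tval : forall t x, 0 <= t <= r -> tau t x = tauR alim t x) by (intros; apply mkC_val; apply tauR_cont; auto).
  exists A, tau. split.
  2:{ intros t Ht. apply supn_le. lra. intros x. rewrite Aval by lra. apply Hg; auto. }
  split; [|split; [|split; [|split; [|split]]]].
  -
    intros t Ht eps He. destruct (Rlt_dec t 0) as [h|h].
    + destruct Hphi as [Hc _]. destruct (Hc t ltac:(lra) eps He) as [d [Hd Hs]].
      exists (Rmin d (- t)). split. apply Rmin_glb_lt; lra. intros s Hsr Hst.
      assert (Rabs (s - t) < - t) by (eapply Rlt_le_trans; [exact Hst| apply Rmin_r]).
      apply Rabs_def2 in H1. rewrite !Aneg by lra. apply Hs. lra. eapply Rlt_le_trans; [exact Hst| apply Rmin_l].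
    + exists (Rmin 1 (eps / 2 / (LA + 1))). split. apply Rmin_glb_lt. lra. apply frac_pos; lra.
      intros s Hsr Hst.
      assert (Hs1 : Rabs (s - t) < 1) by (eapply Rlt_le_trans; [exact Hst| apply Rmin_l]).
      assert (Hs2 : Rabs (s - t) < eps / 2 / (LA + 1)) by (eapply Rlt_le_trans; [exact Hst| apply Rmin_r]).
      apply Rabs_def2 in Hs1.
      apply Rle_lt_trans with (LA * Rabs (s - t)).
      * apply supn_le. apply Rmult_le_pos; auto. apply Rabs_pos. intros x. rewrite !Aval by lra. apply Hg; lra.
      * apply Rle_lt_trans with (LA * (eps / 2 / (LA + 1))). apply Rmult_le_compat_l; auto. left; auto.
        pose proof (frac_le LA (eps / 2) HLA ltac:(lra)). lra.
  -
    intros t Ht eps He. exists (eps / 2 / (ctau + 1)). split. apply frac_pos; lra.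
    intros s Hs Hst. apply Rle_lt_trans with (ctau * Rabs (s - t)).
    * apply supn_le. apply Rmult_le_pos; auto. apply Rabs_pos. intros x. rewrite !tval by lra. apply tauR_lip; auto.
    * apply Rle_lt_trans with (ctau * (eps / 2 / (ctau + 1))). apply Rmult_le_compat_l; auto. left; auto.
      pose proof (frac_le ctau (eps / 2) Hct ltac:(lra)). lra.
  - intros t Ht x. rewrite tval by auto. apply (tauR_bounds alim t x Hg Ht).
  - intros t Ht. apply Aneg; auto.
  - exists (fun l => @mkC2 n Om (Dr alim l)). split.
    + intros l Hl x y. rewrite mkC2_val by (apply D_cont; auto). unfold Dr. simpl.
      rewrite tval by auto. destruct (tauR_bounds alim l x Hg Hl) as [_ B]. rewrite Aval by auto. reflexivity.
    + intros t Ht x.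
      assert (He : ex_RInt (fun l => gA alim l x) 0 t) by (apply gA_ExI; auto; lra).
      exists (ex_RInt_Reals_0 _ _ _ He).
      change (fun l => F (A l) (tau l) (mkC2 (Dr alim l)) x) with (fun l => gA alim l x).
      rewrite <- RInt_Reals. rewrite Aval by lra. rewrite <- fix_alim by auto. rewrite T_pos by auto. reflexivity.
  - intros t Ht x.
    change (fun s => f (A s) x) with (hA alim x). rewrite tval by auto.
    destruct (tauR_ok alim t x Hg Ht) as [_ E]. destruct (tauR_bounds alim t x Hg Ht) as [_ B].
    assert (E1 : ex_RInt (hA alim x) (t - tauR alim t x) t) by (apply hA_ExI; auto; lra).
    assert (E2 : ex_RInt (fun s => f (phi s) x) (- tau0 x) 0).
    { change (fun s => f (phi s) x) with (hP x). pose proof (Htau0 x). pose proof (tau0M x). apply hP_ExI; rewrite Kdef; lra. }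
    exists (ex_RInt_Reals_0 _ _ _ E1), (ex_RInt_Reals_0 _ _ _ E2).
    rewrite <- !RInt_Reals. change (RI (hA alim x) (t - tauR alim t x) t = Gx x) in E. unfold RI, Gx in E. rewrite E. reflexivity.
Qed.

End Ex.

Lemma exp_mono a b : a <= b -> exp a <= exp b.
Proof. intros H. destruct (Req_dec a b) as [->|h]. lra. left. apply exp_increasing. lra. Qed.

Lemma supn_tri n Om (HOm : compactRn n Om) (u v : Pt Om -> R) : contOm n Om u -> contOm n Om v ->
  supn u <= supn v + supn (fun x => u x - v x).
Proof.
  intros Hu Hv. apply supn_le. pose proof (supn_ge0 v). pose proof (supn_ge0 (fun x => u x - v x)). lra.
  intros x. pose proof (supn_ub_CO n Om HOm v x Hv). pose proof (supn_ub_CO n Om HOm (fun x => u x - v x) x (cont_minus n Om u v Hu Hv)).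
  simpl in H0. pose proof (Rabs_triang (v x) (u x - v x)). replace (v x + (u x - v x)) with (u x) in H1 by ring. lra.
Qed.

Lemma supn_sym n Om (HOm : compactRn n Om) (u v : Pt Om -> R) : contOm n Om u -> contOm n Om v ->
  supn (fun x => v x - u x) <= supn (fun x => u x - v x).
Proof.
  intros Hu Hv. apply supn_le. apply supn_ge0. intros x. rewrite Rabs_minus_sym.
  apply (supn_ub_CO n Om HOm (fun x => u x - v x)). apply cont_minus; auto.
Qed.

Lemma exR_Ch1 (h : R -> R) a b c : a <= b <= c -> ex_RInt h a c -> ex_RInt h a b.
Proof. apply (@ex_RInt_Chasles_1 R_CompleteNormedModule h a b c). Qed.
Lemma exR_Ch2 (h : R -> R) a b c : a <= b <= c -> ex_RInt h a c -> ex_RInt h b c.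
Proof. apply (@ex_RInt_Chasles_2 R_CompleteNormedModule h a b c). Qed.

Lemma F_lip_pos n Om (F : CO n Om -> CO n Om -> CO2 n Om -> CO n Om) : F_lip_bounded F ->
  forall Mst, 0 < Mst -> exists Lp, 0 <= Lp /\ forall (u v u' v' : CO n Om) (w w' : CO2 n Om),
    supn u <= Mst -> supn v <= Mst -> supn w <= Mst ->
    supn u' <= Mst -> supn v' <= Mst -> supn w' <= Mst ->
    supn (fun x => F u v w x - F u' v' w' x)
      <= Lp * (supn (fun x => u x - u' x) + supn (fun x => v x - v' x) + supn (fun p => w p - w' p)).
Proof.
  intros HF Mst HM. destruct (HF Mst HM) as [L HL]. exists (Rmax L 0). split. apply Rmax_r.
  intros. eapply Rle_trans. apply HL; auto. apply Rmult_le_compat_r. 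
  pose proof (supn_ge0 (fun x => u x - u' x)). pose proof (supn_ge0 (fun x => v x - v' x)).
  pose proof (supn_ge0 (fun p => w p - w' p)). lra. apply Rmax_l.
Qed.

Lemma exR_swap (h : R -> R) a b : ex_RInt h a b -> ex_RInt h b a.
Proof. apply (@ex_RInt_swap R_CompleteNormedModule). Qed.

Lemma ExI_of (h : R -> R) lo hi : lo <= hi -> ex_RInt h lo hi -> ExI h lo hi.
Proof.
  intros Hlh H a b Ha Hb.
  assert (Ea : ex_RInt h lo a) by (apply exR_Ch1 with hi; auto; lra).
  assert (Eb : ex_RInt h lo b) by (apply exR_Ch1 with hi; auto; lra).
  apply (@ex_RInt_Chasles R_NormedModule h a lo b). apply exR_swap; auto. auto.
Qed.

Section SolFacts.
Variables (n : nat) (Om : (nat -> R) -> Prop) (alpha : R)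
  (F : CO n Om -> CO n Om -> CO2 n Om -> CO n Om) (f : CO n Om -> CO n Om).
Hypotheses (HOm : compactRn n Om) (Halpha : 0 <= alpha) (HF : F_lip_bounded F) (Hf : f_assumptions f).
Variables (M0 : R) (phi : R -> CO n Om) (tau0 : CO n Om).
Hypotheses (Hphi : inLip alpha phi) (Htau0 : forall x, 0 <= tau0 x) (Hnorm : lipnorm alpha phi + supn tau0 <= M0).
Variables (r : R) (A : R -> CO n Om) (tau : R -> CO n Om).
Hypotheses (Hr0 : 0 < r) (Hr1 : r <= 1) (Hsol : is_solution F f phi tau0 r A tau).

Let K := KK M0.

Lemma M0nn' : 0 <= M0.
Proof. apply (M0_nonneg n Om alpha M0 phi tau0 Hnorm). Qed.

Lemma Kdef' : K = M0 + 1.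
Proof. reflexivity. Qed.

Lemma sol_neg t : t <= 0 -> A t = phi t.
Proof. destruct Hsol as [_ [_ [_ [H _]]]]. apply H. Qed.

Lemma f_lower_c c : exists m, 0 < m /\ forall u : CO n Om, (forall y, u y <= c) -> forall x, m <= f u x.
Proof.
  destruct Hf as [_ [[Mf HMf] Hmono]].
  set (cc := mkCO n Om (fun _ => c) (cont_const n Om c)).
  destruct (CO_posmin n Om HOm (f cc) (ccont _ _ _)) as [m [Hm Hmx]]. intros x; apply HMf.
  exists m. split; auto. intros u Hu x. eapply Rle_trans. apply Hmx. apply Hmono. intros y. simpl. auto.
Qed.

Lemma phi_le T th x : 0 <= T -> - T <= th <= 0 -> phi th x <= M0 * exp (alpha * T).
Proof.
  intros HT Hth. rewrite (phi_decomp n Om alpha phi th x).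
  pose proof (w_bound n Om alpha HOm M0 phi tau0 Hphi Hnorm th x ltac:(lra)).
  set (w := exp (- alpha * Rabs th) * phi th x) in *.
  assert (E : exp (alpha * Rabs th) <= exp (alpha * T)).
  { apply exp_mono. apply Rmult_le_compat_l; auto. rewrite Rabs_left1 by lra. lra. }
  pose proof (exp_pos (alpha * Rabs th)). pose proof (Rle_abs w).
  apply Rle_trans with (exp (alpha * Rabs th) * M0). apply Rmult_le_compat_l; lra.
  rewrite Rmult_comm. apply Rmult_le_compat_l. apply M0nn'. auto.
Qed.

Lemma sol_bound0 : exists B, 0 <= B /\ forall t x, 0 <= t <= r -> Rabs (A t x) <= B.
Proof.
  destruct Hsol as [Hc _].
  set (h := fun t => supn (A (clamp 0 r t))).
  assert (Hcont : forall t, continuity_pt h t).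
  { intros z. apply continuity_pt_filterlim. apply cont_of_eps. intros eps He.
    assert (Hz : 0 <= clamp 0 r z <= r) by (apply clamp_in; lra).
    destruct (Hc (clamp 0 r z) ltac:(lra) eps He) as [d [Hd Hs]].
    exists d. split; auto. intros y Hy.
    assert (Hy' : 0 <= clamp 0 r y <= r) by (apply clamp_in; lra).
    assert (Hcl : Rabs (clamp 0 r y - clamp 0 r z) < d) by (eapply Rle_lt_trans; [apply clamp_lip| auto]).
    specialize (Hs (clamp 0 r y) ltac:(lra) Hcl). unfold h.
    set (u := A (clamp 0 r y)) in *. set (v := A (clamp 0 r z)) in *.
    pose proof (supn_tri n Om HOm u v (ccont _ _ _) (ccont _ _ _)).
    pose proof (supn_tri n Om HOm v u (ccont _ _ _) (ccont _ _ _)).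
    pose proof (supn_sym n Om HOm u v (ccont _ _ _) (ccont _ _ _)).
    apply Rabs_def1; lra. }
  destruct (continuity_ab_maj h 0 r ltac:(lra) (fun c _ => Hcont c)) as [Mx [HMx _]].
  exists (h Mx). split. apply supn_ge0. intros t x Ht.
  eapply Rle_trans. apply (supn_ub_CO n Om HOm (A t) x (ccont _ _ _)).
  specialize (HMx t Ht). unfold h in HMx at 1. rewrite clamp_id in HMx by auto. auto.
Qed.

Lemma sol_bound : exists B, 0 <= B /\ forall t x, - K <= t <= r -> Rabs (A t x) <= B.
Proof.
  destruct sol_bound0 as [B [HB HBt]]. exists (Rmax B (Bphi alpha M0)). split.
  eapply Rle_trans; [exact HB| apply Rmax_l].
  intros t x Ht. destruct (Rle_dec t 0).
  - rewrite sol_neg by auto. eapply Rle_trans; [|apply Rmax_r].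
    apply (phi_bound n Om alpha HOm Halpha M0 phi tau0 Hphi Hnorm); unfold K in Ht; lra.
  - eapply Rle_trans; [|apply Rmax_l]. apply HBt; lra.
Qed.

Definition Gy (x : Pt Om) : R := RI (fun s => f (phi s) x) (- tau0 x) 0.

Lemma sol_thr t x : 0 <= t <= r ->
  ex_RInt (fun s => f (A s) x) (t - tau t x) t /\ RI (fun s => f (A s) x) (t - tau t x) t = Gy x /\
  ex_RInt (fun s => f (phi s) x) (- tau0 x) 0.
Proof.
  intros Ht. destruct Hsol as [_ [_ [_ [_ [_ H]]]]]. destruct (H t Ht x) as [pr1 [pr2 E]].
  split; [|split]. apply ex_RInt_Reals_1; auto.
  unfold RI, Gy. rewrite (RInt_Reals _ _ _ pr1), E, <- (RInt_Reals _ _ _ pr2). reflexivity.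
  apply ex_RInt_Reals_1; auto.
Qed.

Lemma fA_pos s x : 0 < f (A s) x.
Proof. destruct Hf as [_ [[Mf HMf] _]]. apply HMf. Qed.

Lemma sol_tau t x : 0 <= t <= r -> 0 <= tau t x <= t + tau0 x.
Proof.
  intros Ht. destruct Hsol as [_ [_ [Hpos _]]]. split. apply Hpos; auto.
  apply Rnot_lt_le. intros Hlt.
  destruct (sol_thr t x Ht) as [E1 [E2 _]].
  set (T := tau t x). fold T in E1, E2, Hlt.
  pose proof (Htau0 x).
  assert (HT : 0 <= T) by (unfold T; apply Hpos; auto).
  destruct (f_lower_c (M0 * exp (alpha * T))) as [m [Hm Hmu]].
  assert (Hlow : forall s, t - T <= s <= 0 -> m <= f (A s) x).
  { intros s Hs. apply Hmu. intros y. rewrite sol_neg by lra. apply phi_le; lra. }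
  assert (e1 : ex_RInt (fun s => f (A s) x) (t - T) (- tau0 x)) by (apply exR_Ch1 with t; auto; lra).
  assert (e2 : ex_RInt (fun s => f (A s) x) (- tau0 x) t) by (apply exR_Ch2 with (t - T); auto; lra).
  assert (e3 : ex_RInt (fun s => f (A s) x) (- tau0 x) 0) by (apply exR_Ch1 with t; auto; lra).
  assert (e4 : ex_RInt (fun s => f (A s) x) 0 t) by (apply exR_Ch2 with (- tau0 x); auto; lra).
  assert (C1 : RI (fun s => f (A s) x) (t - T) t = RI (fun s => f (A s) x) (t - T) (- tau0 x) + RI (fun s => f (A s) x) (- tau0 x) t).
  { unfold RI. symmetry. apply RInt_Chasles'; auto. }
  assert (C2 : RI (fun s => f (A s) x) (- tau0 x) t = RI (fun s => f (A s) x) (- tau0 x) 0 + RI (fun s => f (A s) x) 0 t).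
  { unfold RI. symmetry. apply RInt_Chasles'; auto. }
  assert (C3 : RI (fun s => f (A s) x) (- tau0 x) 0 = Gy x).
  { unfold RI, Gy. apply RInt_ext. intros s Hs. rewrite Rmin_left, Rmax_right in Hs by lra. rewrite sol_neg by lra. reflexivity. }
  assert (P1 : m * (- tau0 x - (t - T)) <= RI (fun s => f (A s) x) (t - T) (- tau0 x)).
  { apply RI_lower; auto. lra. intros s Hs. apply Hlow. lra. }
  assert (P2 : 0 * (t - 0) <= RI (fun s => f (A s) x) 0 t).
  { apply RI_lower; auto. lra. intros s Hs. left. apply fA_pos. }
  assert (0 < m * (- tau0 x - (t - T))) by (apply Rmult_lt_0_compat; lra).
  lra.
Qed.


Lemma sol_int : exists D : R -> CO2 n Om,
  (forall l, 0 <= l <= r -> forall x y, D l (x, y) = A (l - tau l x) y) /\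
  (forall x, ExI (fun l => F (A l) (tau l) (D l) x) 0 r) /\
  (forall t x, 0 <= t <= r -> A t x = phi 0 x + RI (fun l => F (A l) (tau l) (D l) x) 0 t).
Proof.
  destruct Hsol as [_ [_ [_ [_ [[D [HD HI]] _]]]]]. exists D. split; auto. split.
  - intros x. destruct (HI r ltac:(lra) x) as [pr _]. apply ExI_of. lra. apply ex_RInt_Reals_1; auto.
  - intros t x Ht. destruct (HI t Ht x) as [pr E]. rewrite E. unfold RI. rewrite (RInt_Reals _ _ _ pr). reflexivity.
Qed.

Lemma sol_lip : exists B Lam, 0 <= B /\ 0 <= Lam /\
  (forall t x, - K <= t <= r -> Rabs (A t x) <= B) /\
  (forall s s' x, - K <= s <= r -> - K <= s' <= r -> Rabs (A s x - A s' x) <= Lam * Rabs (s - s')).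
Proof.
  destruct sol_bound as [B [HB HBt]]. destruct sol_int as [D [HD [HE HI]]].
  pose proof M0nn' as HM0.
  assert (HK : K = M0 + 1) by reflexivity.
  set (Mst := B + K + 1).
  destruct (F_lip_pos n Om F HF Mst ltac:(unfold Mst; lra)) as [Lp [HLp0 HLp]].
  set (zC := mkCO n Om (fun _ => 0) (cont_const n Om 0)).
  set (zC2 := mkCO2 n Om (fun _ => 0) (cont2_const n Om 0)).
  destruct (CO_bounded n Om HOm (F zC zC zC2) (ccont _ _ _)) as [F0b HF0].
  set (C := Rmax F0b 0 + Lp * (B + K + B)).
  assert (Hg : forall l x, 0 <= l <= r -> Rabs (F (A l) (tau l) (D l) x) <= C).
  { intros l x Hl.
    assert (E : Rabs (F (A l) (tau l) (D l) x - F zC zC zC2 x) <= Lp * (B + K + B)).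
    { apply (F_est n Om HOm F Mst Lp HLp); auto; try (unfold Mst; lra); try (intros; simpl; rewrite Rabs_R0; unfold Mst; lra).
      - intros y. apply Rle_trans with B. apply HBt; lra. unfold Mst; lra.
      - intros y. pose proof (sol_tau l y Hl). pose proof (tau0_le n Om alpha HOm M0 phi tau0 Hnorm y). rewrite Rabs_right by lra. unfold Mst; lra.
      - intros [y z]. rewrite HD by auto. pose proof (sol_tau l y Hl). pose proof (tau0_le n Om alpha HOm M0 phi tau0 Hnorm y).
        apply Rle_trans with B. apply HBt; lra. unfold Mst; lra.
      - intros y. simpl. rewrite Rminus_0_r. apply HBt; lra.
      - intros y. simpl. rewrite Rminus_0_r. pose proof (sol_tau l y Hl). pose proof (tau0_le n Om alpha HOm M0 phi tau0 Hnorm y). rewrite Rabs_right by lra. lra.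
      - intros [y z]. simpl. rewrite Rminus_0_r. rewrite HD by auto. pose proof (sol_tau l y Hl). pose proof (tau0_le n Om alpha HOm M0 phi tau0 Hnorm y).
        apply HBt; lra. }
    pose proof (HF0 x). pose proof (Rmax_l F0b 0).
    pose proof (Rabs_triang (F (A l) (tau l) (D l) x - F zC zC zC2 x) (F zC zC zC2 x)).
    replace (F (A l) (tau l) (D l) x - F zC zC zC2 x + F zC zC zC2 x) with (F (A l) (tau l) (D l) x) in H1 by ring.
    unfold C. lra. }
  assert (HC : 0 <= C) by (unfold C; pose proof (Rmax_r F0b 0); apply Rplus_le_le_0_compat; auto; apply Rmult_le_pos; auto; lra).
  set (Lam := Rmax (Lphi alpha M0) C).
  assert (HLam : 0 <= Lam) by (eapply Rle_trans; [exact HC| apply Rmax_r]).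
  exists B, Lam. split; auto. split; auto. split; auto.
  assert (Hpos : forall s s' x, 0 <= s <= r -> 0 <= s' <= r -> Rabs (A s x - A s' x) <= Lam * Rabs (s - s')).
  { intros s s' x Hs Hs'. rewrite (HI s x Hs), (HI s' x Hs').
    rewrite (chasles _ 0 r 0 s' s) by (auto; lra).
    replace (phi 0 x + (RI (fun l => F (A l) (tau l) (D l) x) 0 s' + RI (fun l => F (A l) (tau l) (D l) x) s' s) -
      (phi 0 x + RI (fun l => F (A l) (tau l) (D l) x) 0 s')) with (RI (fun l => F (A l) (tau l) (D l) x) s' s) by ring.
    eapply Rle_trans. { apply (int_bound _ 0 r s' s C). apply HE. lra. lra. intros ss Hss; apply Hg; auto. }
    rewrite Rmult_comm, Rabs_minus_sym. apply Rmult_le_compat_r. apply Rabs_pos. apply Rmax_r. }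
  assert (Hneg : forall s s' x, - K <= s <= 0 -> - K <= s' <= 0 -> Rabs (A s x - A s' x) <= Lam * Rabs (s - s')).
  { intros s s' x Hs Hs'. rewrite !sol_neg by lra. eapply Rle_trans.
    apply (phi_lip n Om alpha HOm Halpha M0 phi tau0 Hphi Hnorm); auto.
    apply Rmult_le_compat_r. apply Rabs_pos. apply Rmax_l. }
  intros s s' x Hs Hs'.
  destruct (Rle_dec s 0) as [h1|h1]; destruct (Rle_dec s' 0) as [h2|h2].
  + apply Hneg; lra.
  + replace (A s x - A s' x) with ((A s x - A 0 x) + (A 0 x - A s' x)) by ring.
    eapply Rle_trans. apply Rabs_triang.
    pose proof (Hneg s 0 x ltac:(lra) ltac:(lra)). pose proof (Hpos 0 s' x ltac:(lra) ltac:(lra)).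
    rewrite Rminus_0_r in H. rewrite Rminus_0_l, Rabs_Ropp in H0.
    rewrite (Rabs_left1 s) in H by lra. rewrite (Rabs_right s') in H0 by lra.
    rewrite (Rabs_left1 (s - s')) by lra. lra.
  + replace (A s x - A s' x) with ((A s x - A 0 x) + (A 0 x - A s' x)) by ring.
    eapply Rle_trans. apply Rabs_triang.
    pose proof (Hpos s 0 x ltac:(lra) ltac:(lra)). pose proof (Hneg 0 s' x ltac:(lra) ltac:(lra)).
    rewrite Rminus_0_r in H. rewrite Rminus_0_l, Rabs_Ropp in H0.
    rewrite (Rabs_right s) in H by lra. rewrite (Rabs_left1 s') in H0 by lra.
    rewrite (Rabs_right (s - s')) by lra. lra.
  + apply Hpos; lra.
Qed.

End SolFacts.

Lemma small_pow c X : 0 <= c -> (forall k, X <= c * (/ 2) ^ k) -> X <= 0.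
Proof.
  intros Hc H. apply Rnot_lt_le. intros HX.
  destruct (pow_lt_1_zero (/ 2) ltac:(rewrite Rabs_right; lra) (X / (c + 1))) as [N HN].
  apply Rdiv_lt_0_compat; lra.
  specialize (HN N (le_n N)). rewrite Rabs_right in HN by (apply Rle_ge, pow_le; lra).
  specialize (H N). assert (c * (/ 2) ^ N <= (c + 1) * (/ 2) ^ N) by (apply Rmult_le_compat_r; [apply pow_le|]; lra).
  assert ((c + 1) * (/ 2) ^ N < (c + 1) * (X / (c + 1))) by (apply Rmult_lt_compat_l; lra).
  replace ((c + 1) * (X / (c + 1))) with X in H1 by (field; lra). lra.
Qed.

Lemma abs_le0 z : Rabs z <= 0 -> z = 0.
Proof. intros H. pose proof (Rabs_pos z). apply Rabs_eq_0. lra. Qed.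

Section UniqCore.
Variables (n : nat) (Om : (nat -> R) -> Prop) (alpha : R)
  (F : CO n Om -> CO n Om -> CO2 n Om -> CO n Om) (f : CO n Om -> CO n Om).
Hypotheses (HOm : compactRn n Om) (Halpha : 0 <= alpha) (HF : F_lip_bounded F) (Hf : f_assumptions f).
Variables (M0 : R) (phi : R -> CO n Om) (tau0 : CO n Om).
Hypotheses (Hphi : inLip alpha phi) (Htau0 : forall x, 0 <= tau0 x) (Hnorm : lipnorm alpha phi + supn tau0 <= M0).
Variables (r : R) (A1 tau1 A2 tau2 : R -> CO n Om).
Hypotheses (Hr0 : 0 < r) (Hr1 : r <= 1) (Hs1 : is_solution F f phi tau0 r A1 tau1) (Hs2 : is_solution F f phi tau0 r A2 tau2).

Let K := KK M0.
Variables (D1 D2 : R -> CO2 n Om) (B Lam Lp Lf m : R).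
Let Mst := B + K + 1.
Hypotheses
  (HD1 : forall l, 0 <= l <= r -> forall x y, D1 l (x, y) = A1 (l - tau1 l x) y)
  (HD2 : forall l, 0 <= l <= r -> forall x y, D2 l (x, y) = A2 (l - tau2 l x) y)
  (HE1 : forall x, ExI (fun l => F (A1 l) (tau1 l) (D1 l) x) 0 r)
  (HE2 : forall x, ExI (fun l => F (A2 l) (tau2 l) (D2 l) x) 0 r)
  (HI1 : forall t x, 0 <= t <= r -> A1 t x = phi 0 x + RI (fun l => F (A1 l) (tau1 l) (D1 l) x) 0 t)
  (HI2 : forall t x, 0 <= t <= r -> A2 t x = phi 0 x + RI (fun l => F (A2 l) (tau2 l) (D2 l) x) 0 t)
  (HB : 0 <= B) (HLam : 0 <= Lam)
  (HB1 : forall t x, - K <= t <= r -> Rabs (A1 t x) <= B)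
  (HB2 : forall t x, - K <= t <= r -> Rabs (A2 t x) <= B)
  (HL1 : forall s s' x, - K <= s <= r -> - K <= s' <= r -> Rabs (A1 s x - A1 s' x) <= Lam * Rabs (s - s'))
  (HL2 : forall s s' x, - K <= s <= r -> - K <= s' <= r -> Rabs (A2 s x - A2 s' x) <= Lam * Rabs (s - s'))
  (HLp0 : 0 <= Lp)
  (HLp : forall (u v u' v' : CO n Om) (w w' : CO2 n Om),
    supn u <= Mst -> supn v <= Mst -> supn w <= Mst ->
    supn u' <= Mst -> supn v' <= Mst -> supn w' <= Mst ->
    supn (fun x => F u v w x - F u' v' w' x)
      <= Lp * (supn (fun x => u x - u' x) + supn (fun x => v x - v' x) + supn (fun p => w p - w' p)))
  (HLf0 : 0 <= Lf) (HLf : forall u v : CO n Om, supn (fun x => f u x - f v x) <= Lf * supn (fun x => u x - v x))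
  (Hm0 : 0 < m) (Hm : forall u : CO n Om, (forall y, u y <= B) -> forall x, m <= f u x).

Let kap := 2 + (1 + Lam) * K * Lf / m.
Let rho := 1 / (2 * (Lp * kap + 1)).

Lemma Kd : K = M0 + 1.
Proof. reflexivity. Qed.
Lemma M0n : 0 <= M0.
Proof. apply (M0_nonneg n Om alpha M0 phi tau0 Hnorm). Qed.
Lemma t0le x : tau0 x <= M0.
Proof. apply (tau0_le n Om alpha HOm M0 phi tau0 Hnorm). Qed.

Lemma kap_ge : 0 <= kap.
Proof.
  unfold kap. assert (0 <= (1 + Lam) * K * Lf / m).
  { apply Rdiv_le_0_compat; auto. apply Rmult_le_pos; auto. apply Rmult_le_pos; [lra|]. pose proof M0n. rewrite Kd; lra. }
  lra.
Qed.

Lemma rho_pos : 0 < rho.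
Proof. pose proof kap_ge. unfold rho. apply Rdiv_lt_0_compat. lra. assert (0 <= Lp * kap) by (apply Rmult_le_pos; auto). lra. Qed.

Lemma rho_k : rho * (Lp * kap) <= 1 / 2.
Proof.
  pose proof kap_ge. assert (0 <= Lp * kap) by (apply Rmult_le_pos; auto). unfold rho.
  apply Rle_trans with (1 / (2 * (Lp * kap + 1)) * (Lp * kap + 1)).
  apply Rmult_le_compat_l. left; apply Rdiv_lt_0_compat; lra. lra. right. field. lra.
Qed.

Definition h1 x s := f (A1 s) x.
Definition h2 x s := f (A2 s) x.

Lemma h_ExI (A : R -> CO n Om) x : (forall s s' x, - K <= s <= r -> - K <= s' <= r -> Rabs (A s x - A s' x) <= Lam * Rabs (s - s')) ->
  ExI (fun s => f (A s) x) (- K) r.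
Proof.
  intros HL. apply ExI_cont. pose proof M0n. rewrite Kd; lra.
  apply (Lip_ContOn _ _ _ (Lf * Lam)). intros s t Hs Ht. rewrite Rmult_assoc.
  apply (f_est n Om HOm f Lf HLf); auto. apply Rmult_le_pos; auto. apply Rabs_pos.
Qed.

Lemma tau_props (A tau : R -> CO n Om) (Hs : is_solution F f phi tau0 r A tau) l x : 0 <= l <= r ->
  0 <= tau l x <= K /\ - K <= l - tau l x <= l.
Proof.
  intros Hl. pose proof (sol_tau n Om alpha F f HOm Halpha Hf M0 phi tau0 Hphi Htau0 Hnorm r A tau Hs l x Hl) as H.
  pose proof (t0le x). pose proof M0n. rewrite Kd. split; split; lra.
Qed.

Lemma taudiff l e x : 0 <= l <= r -> 0 <= e -> (forall s y, 0 <= s <= l -> Rabs (A1 s y - A2 s y) <= e) ->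
  Rabs (tau1 l x - tau2 l x) <= K * Lf * e / m.
Proof.
  intros Hl He Hd. pose proof M0n. assert (HK : 0 <= K) by (rewrite Kd; lra).
  destruct (tau_props A1 tau1 Hs1 l x Hl) as [T1 T2]. destruct (tau_props A2 tau2 Hs2 l x Hl) as [T3 T4].
  destruct (sol_thr n Om F f phi tau0 r A1 tau1 Hs1 l x Hl) as [_ [E1 _]].
  destruct (sol_thr n Om F f phi tau0 r A2 tau2 Hs2 l x Hl) as [_ [E2 _]].
  assert (P : m * Rabs (tau1 l x - tau2 l x) <= Rabs (Gy n Om f phi tau0 x - Gy n Om f phi tau0 x) + tau2 l x * (Lf * e)).
  { apply (tau_cmp1 (fun s => f (A1 s) x) (fun s => f (A2 s) x) (- K) l m (Lf * e) l); auto; try lra.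
    - apply (ExI_sub _ (- K) r); try lra. apply h_ExI; auto.
    - apply (ExI_sub _ (- K) r); try lra. apply h_ExI; auto.
    - intros s Hs. apply Hm. intros y. pose proof (HB1 s y ltac:(lra)). pose proof (Rle_abs (A1 s y)). lra.
    - intros s Hs. apply (f_est n Om HOm f Lf HLf); auto. intros y. destruct (Rle_dec s 0).
      + rewrite (sol_neg n Om F f phi tau0 r A1 tau1 Hs1 s r0), (sol_neg n Om F f phi tau0 r A2 tau2 Hs2 s r0).
        rewrite Rminus_diag, Rabs_R0. auto.
      + apply Hd. lra. }
  rewrite Rminus_diag, Rabs_R0 in P.
  assert (tau2 l x * (Lf * e) <= K * (Lf * e)) by (apply Rmult_le_compat_r; [apply Rmult_le_pos; auto| lra]).
  apply Rmult_le_reg_l with m; auto. replace (m * (K * Lf * e / m)) with (K * (Lf * e)) by (field; lra). lra.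
Qed.

Lemma gdiff l e x : 0 <= l <= r -> 0 <= e -> (forall s y, 0 <= s <= l -> Rabs (A1 s y - A2 s y) <= e) ->
  Rabs (F (A1 l) (tau1 l) (D1 l) x - F (A2 l) (tau2 l) (D2 l) x) <= Lp * kap * e.
Proof.
  intros Hl He Hd. pose proof M0n. assert (HK : 0 <= K) by (rewrite Kd; lra).
  set (dt := K * Lf * e / m).
  assert (Hdt : 0 <= dt) by (unfold dt; apply Rdiv_le_0_compat; auto; apply Rmult_le_pos; [apply Rmult_le_pos|]; auto).
  replace (Lp * kap * e) with (Lp * (e + dt + (Lam * dt + e))) by (unfold kap, dt; field; lra).
  assert (HM1 : B <= Mst) by (unfold Mst; lra). assert (HM2 : K <= Mst) by (unfold Mst; lra).
  apply (F_est n Om HOm F Mst Lp HLp); auto; try lra.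
  - apply Rplus_le_le_0_compat; auto. apply Rmult_le_pos; auto.
  - intros y. eapply Rle_trans; [apply HB1; lra| auto].
  - intros y. destruct (tau_props A1 tau1 Hs1 l y Hl). rewrite Rabs_right by lra. lra.
  - intros [y z]. rewrite HD1 by auto. destruct (tau_props A1 tau1 Hs1 l y Hl). eapply Rle_trans; [apply HB1; lra| auto].
  - intros y. eapply Rle_trans; [apply HB2; lra| auto].
  - intros y. destruct (tau_props A2 tau2 Hs2 l y Hl). rewrite Rabs_right by lra. lra.
  - intros [y z]. rewrite HD2 by auto. destruct (tau_props A2 tau2 Hs2 l y Hl). eapply Rle_trans; [apply HB2; lra| auto].
  - intros y. apply Hd. lra.
  - intros y. apply taudiff; auto.
  - intros [y z]. rewrite HD1, HD2 by auto.
    destruct (tau_props A1 tau1 Hs1 l y Hl) as [_ B1']. destruct (tau_props A2 tau2 Hs2 l y Hl) as [_ B2'].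
    replace (A1 (l - tau1 l y) z - A2 (l - tau2 l y) z) with
      ((A1 (l - tau1 l y) z - A1 (l - tau2 l y) z) + (A1 (l - tau2 l y) z - A2 (l - tau2 l y) z)) by ring.
    eapply Rle_trans. apply Rabs_triang. apply Rplus_le_compat.
    + eapply Rle_trans. apply HL1; lra. apply Rmult_le_compat_l; auto.
      replace (l - tau1 l y - (l - tau2 l y)) with (- (tau1 l y - tau2 l y)) by ring. rewrite Rabs_Ropp.
      apply taudiff; auto.
    + destruct (Rle_dec (l - tau2 l y) 0) as [h|h].
      * rewrite (sol_neg n Om F f phi tau0 r A1 tau1 Hs1 _ h), (sol_neg n Om F f phi tau0 r A2 tau2 Hs2 _ h).
        rewrite Rminus_diag, Rabs_R0. auto.
      * apply Hd. lra.
Qed.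

Lemma step t0 : 0 <= t0 <= r -> (forall s y, 0 <= s <= t0 -> A1 s y = A2 s y) ->
  forall s y, 0 <= s <= Rmin (t0 + rho) r -> A1 s y = A2 s y.
Proof.
  intros Ht0 Heq. pose proof rho_pos. pose proof kap_ge. set (t1 := Rmin (t0 + rho) r).
  assert (Ht1 : t0 <= t1 <= r) by (unfold t1; split; [apply Rmin_glb; lra| apply Rmin_r]).
  assert (Ht1' : t1 <= t0 + rho) by apply Rmin_l.
  assert (Hzero : forall l y, 0 <= l <= t0 -> F (A1 l) (tau1 l) (D1 l) y = F (A2 l) (tau2 l) (D2 l) y).
  { intros l y Hl. pose proof (gdiff l 0 y ltac:(lra) (Rle_refl 0)) as G.
    rewrite Rmult_0_r in G. assert (Z : Rabs (F (A1 l) (tau1 l) (D1 l) y - F (A2 l) (tau2 l) (D2 l) y) <= 0).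
    { apply G. intros s z Hs. rewrite Heq by lra. rewrite Rminus_diag, Rabs_R0. lra. }
    apply abs_le0 in Z. lra. }
  assert (Hk : forall k s y, 0 <= s <= t1 -> Rabs (A1 s y - A2 s y) <= 2 * B * (/ 2) ^ k).
  { induction k; intros s y Hs.
    - simpl. rewrite Rmult_1_r. eapply Rle_trans. apply Rabs_triang. rewrite Rabs_Ropp.
      pose proof (HB1 s y ltac:(rewrite Kd; pose proof M0n; lra)). pose proof (HB2 s y ltac:(rewrite Kd; pose proof M0n; lra)). lra.
    - set (e := 2 * B * (/ 2) ^ k).
      assert (He : 0 <= e) by (unfold e; apply Rmult_le_pos; [lra| apply pow_le; lra]).
      replace (2 * B * (/ 2) ^ S k) with (e / 2) by (unfold e; simpl; field).
      destruct (Rle_dec s t0) as [h|h].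
      { rewrite Heq by lra. rewrite Rminus_diag, Rabs_R0. lra. }
      rewrite HI1, HI2 by lra.
      set (g1 := fun l => F (A1 l) (tau1 l) (D1 l) y). set (g2 := fun l => F (A2 l) (tau2 l) (D2 l) y).
      rewrite (chasles g1 0 r 0 t0 s) by (first [exact (HE1 y) | lra]). rewrite (chasles g2 0 r 0 t0 s) by (first [exact (HE2 y) | lra]).
      assert (Z : RI g1 0 t0 = RI g2 0 t0).
      { pose proof (int_diff g1 g2 0 t0 0 t0 0 (ExI_sub _ 0 r 0 t0 (HE1 y) ltac:(lra) ltac:(lra))
           (ExI_sub _ 0 r 0 t0 (HE2 y) ltac:(lra) ltac:(lra)) ltac:(lra) ltac:(lra)) as Q.
        assert (Rabs (RI g1 0 t0 - RI g2 0 t0) <= 0).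
        { eapply Rle_trans. apply Q. intros l Hl. 
          - unfold g1, g2. rewrite Hzero by lra. rewrite Rminus_diag, Rabs_R0. lra.
          - lra. }
        apply abs_le0 in H1. lra. }
      replace (phi 0 y + (RI g1 0 t0 + RI g1 t0 s) - (phi 0 y + (RI g2 0 t0 + RI g2 t0 s))) with (RI g1 t0 s - RI g2 t0 s) by (rewrite Z; ring).
      eapply Rle_trans. apply (int_diff g1 g2 t0 s t0 s (Lp * kap * e)); try lra.
      { apply (ExI_sub _ 0 r); [exact (HE1 y)| lra | lra]. } { apply (ExI_sub _ 0 r); [exact (HE2 y)| lra| lra]. }
      { intros l Hl. unfold g1, g2. apply gdiff; [lra| auto| intros s' z Hs'; apply IHk; lra]. }
      rewrite Rabs_right by lra.
      assert ((s - t0) * (Lp * kap * e) <= rho * (Lp * kap) * e).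
      { rewrite <- Rmult_assoc. apply Rmult_le_compat_r; auto. apply Rmult_le_compat_r. apply Rmult_le_pos; auto. lra. }
      pose proof rho_k. assert (rho * (Lp * kap) * e <= 1 / 2 * e) by (apply Rmult_le_compat_r; auto). lra. }
  intros s y Hs. assert (Z : Rabs (A1 s y - A2 s y) <= 0) by (apply (small_pow (2 * B)); [lra| intros; apply Hk; auto]).
  apply abs_le0 in Z. lra.
Qed.


Lemma uniq_core : (forall t, t <= r -> A1 t = A2 t) /\ (forall t, 0 <= t <= r -> tau1 t = tau2 t).
Proof.
  pose proof rho_pos as Hrho.
  assert (Hj : forall j s y, 0 <= s <= Rmin (INR j * rho) r -> A1 s y = A2 s y).
  { induction j; intros s y Hs.
    - simpl in Hs. rewrite Rmult_0_l, Rmin_left in Hs by lra. assert (s = 0) by lra. subst.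
      rewrite (sol_neg n Om F f phi tau0 r A1 tau1 Hs1 0 (Rle_refl 0)), (sol_neg n Om F f phi tau0 r A2 tau2 Hs2 0 (Rle_refl 0)).
      reflexivity.
    - set (t0 := Rmin (INR j * rho) r).
      assert (Ht0 : 0 <= t0 <= r).
      { unfold t0. split. apply Rmin_glb. apply Rmult_le_pos. apply pos_INR. lra. lra. apply Rmin_r. }
      apply (step t0 Ht0 IHj). rewrite S_INR in Hs. split. lra.
      unfold t0. unfold Rmin in *. repeat destruct Rle_dec; lra. }
  assert (Hall : forall s y, 0 <= s <= r -> A1 s y = A2 s y).
  { intros s y Hs. destruct (archimed (r / rho)) as [H1 _].
    assert (Hup : (0 <= up (r / rho))%Z).
    { apply le_IZR. assert (0 < r / rho) by (apply Rdiv_lt_0_compat; lra). simpl. lra. }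
    apply (Hj (Z.to_nat (up (r / rho)))). rewrite Rmin_right. lra.
    rewrite INR_IZR_INZ, Z2Nat.id by auto.
    apply Rmult_le_reg_r with (/ rho). apply Rinv_0_lt_compat; auto.
    rewrite Rmult_assoc, Rinv_r, Rmult_1_r by lra. unfold Rdiv in H1. lra. }
  split.
  - intros t Ht. destruct (Rle_dec t 0) as [h|h].
    + rewrite (sol_neg n Om F f phi tau0 r A1 tau1 Hs1 t h), (sol_neg n Om F f phi tau0 r A2 tau2 Hs2 t h). reflexivity.
    + apply CO_ext. intros x. apply Hall. lra.
  - intros t Ht. apply CO_ext. intros x.
    assert (Z : Rabs (tau1 t x - tau2 t x) <= 0).
    { eapply Rle_trans. apply (taudiff t 0 x Ht (Rle_refl 0)).
      intros s y Hs. rewrite Hall by lra. rewrite Rminus_diag, Rabs_R0. lra.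
      rewrite Rmult_0_r. unfold Rdiv. rewrite Rmult_0_l. lra. }
    apply abs_le0 in Z. lra.
Qed.

End UniqCore.

Theorem theorem4p4
  (n : nat) (Om : (nat -> R) -> Prop) (alpha : R)
  (F : CO n Om -> CO n Om -> CO2 n Om -> CO n Om) (f : CO n Om -> CO n Om)
  (HOm : compactRn n Om) (Halpha : 0 <= alpha)
  (HF : F_lip_bounded F) (Hf : f_assumptions f)
  (M0 M : R) (HM0 : 0 < M0) (HM : M0 < M) :
  exists r, 0 < r /\
    forall (phi : R -> CO n Om) (tau0 : CO n Om),
      inLip alpha phi ->
      (forall x, 0 <= tau0 x) ->
      lipnorm alpha phi + supn tau0 <= M0 ->
      (exists A tau, is_solution F f phi tau0 r A tau /\
         forall t, 0 <= t <= r -> supn (A t) <= M) /\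
      (forall A1 tau1 A2 tau2,
         is_solution F f phi tau0 r A1 tau1 ->
         is_solution F f phi tau0 r A2 tau2 ->
         (forall t, t <= r -> A1 t = A2 t) /\
         (forall t, 0 <= t <= r -> tau1 t = tau2 t)).
Proof.
  set (K := KK M0). set (MB := Rmax M (Bphi alpha M0)). set (Mst := MB + K + 1).
  assert (HK : K = M0 + 1) by reflexivity.
  assert (HMB : M <= MB) by apply Rmax_l.
  destruct (F_lip_pos n Om F HF Mst ltac:(unfold Mst; lra)) as [Lp [HLp0 HLp]].
  pose proof Hf as Hf'. destruct Hf' as [[Lf0 HLf0] [[Mf0 HMf0] Hmono]].
  set (Lf := Rmax Lf0 0). set (Mf := Rmax Mf0 0).
  assert (HLf : forall u v : CO n Om, supn (fun x => f u x - f v x) <= Lf * supn (fun x => u x - v x)).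
  { intros u v. eapply Rle_trans. apply HLf0. apply Rmult_le_compat_r. apply supn_ge0. apply Rmax_l. }
  assert (HMf : forall u x, 0 < f u x /\ f u x <= Mf).
  { intros u x. destruct (HMf0 u x). split; auto. eapply Rle_trans; eauto. apply Rmax_l. }
  set (cMB := mkCO n Om (fun _ => MB) (cont_const n Om MB)).
  destruct (CO_posmin n Om HOm (f cMB) (ccont _ _ _)) as [mlow [Hml0 Hml]]. intros x; apply HMf.
  set (zC := mkCO n Om (fun _ => 0) (cont_const n Om 0)).
  set (zC2 := mkCO2 n Om (fun _ => 0) (cont2_const n Om 0)).
  destruct (CO_bounded n Om HOm (F zC zC zC2) (ccont _ _ _)) as [B0 HB0].
  set (F0b := Rmax B0 0).
  assert (HF0 : forall x, Rabs (F zC zC zC2 x) <= F0b) by (intros; eapply Rle_trans; [apply HB0| apply Rmax_l]).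
  assert (HF0b : 0 <= F0b) by apply Rmax_r.
  assert (HMf1 : 0 <= Mf) by apply Rmax_r.
  assert (HLf1 : 0 <= Lf) by apply Rmax_r.
  set (CF := F0b + Lp * (2 * MB + K)).
  set (LA := Rmax (Lphi alpha M0) CF).
  set (kap := 2 + (1 + LA) * K * Lf / mlow).
  assert (HMB0 : 0 < MB) by lra.
  assert (HCF : 0 <= CF) by (unfold CF; apply Rplus_le_le_0_compat; auto; apply Rmult_le_pos; auto; lra).
  assert (HLA : 0 <= LA) by (eapply Rle_trans; [exact HCF| apply Rmax_r]).
  assert (Hkap : 0 <= kap).
  { unfold kap. assert (0 <= (1 + LA) * K * Lf / mlow).
    { apply Rdiv_le_0_compat; auto. apply Rmult_le_pos; auto. apply Rmult_le_pos; lra. } lra. }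
  assert (HLk : 0 <= Lp * kap) by (apply Rmult_le_pos; auto).
  set (r := Rmin 1 (Rmin ((M - M0) / (CF + 1)) (1 / (2 * (Lp * kap + 1))))).
  assert (Hr0 : 0 < r).
  { unfold r. apply Rmin_glb_lt. lra. apply Rmin_glb_lt; apply Rdiv_lt_0_compat; lra. }
  assert (Hr1 : r <= 1) by apply Rmin_l.
  assert (HrCF : r * CF <= M - M0).
  { apply Rle_trans with ((M - M0) / (CF + 1) * CF).
    apply Rmult_le_compat_r; auto. unfold r. eapply Rle_trans; [apply Rmin_r| apply Rmin_l].
    apply Rle_trans with ((M - M0) / (CF + 1) * (CF + 1)). apply Rmult_le_compat_l. apply Rdiv_le_0_compat; lra. lra.
    right. field. lra. }
  assert (Hrk : r * (Lp * kap) <= 1 / 2).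
  { apply Rle_trans with (1 / (2 * (Lp * kap + 1)) * (Lp * kap)).
    apply Rmult_le_compat_r; auto. unfold r. eapply Rle_trans; [apply Rmin_r| apply Rmin_r].
    apply Rle_trans with (1 / (2 * (Lp * kap + 1)) * (Lp * kap + 1)). apply Rmult_le_compat_l.
    left; apply Rdiv_lt_0_compat; lra. lra. right. field. lra. }
  exists r. split; auto.
  intros phi tau0 Hphi Htau0 Hnorm. split.
  - apply (exist_sol n Om alpha F f HOm Halpha M0 M HM0 HM phi tau0 Hphi Htau0 Hnorm Lp Lf Mf mlow F0b r
      HLp0 HLp HLf1 HLf HMf Hmono Hml0 Hml HF0 HF0b HMf1 Hr0 Hr1 HrCF Hrk).
  - intros A1 tau1 A2 tau2 Hs1 Hs2.
    destruct (sol_int n Om F f phi tau0 r A1 tau1 Hr0 Hs1) as [D1 [HD1 [HE1 HI1]]].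
    destruct (sol_int n Om F f phi tau0 r A2 tau2 Hr0 Hs2) as [D2 [HD2 [HE2 HI2]]].
    destruct (sol_lip n Om alpha F f HOm Halpha HF Hf M0 phi tau0 Hphi Htau0 Hnorm r A1 tau1 Hr0 Hr1 Hs1) as [B1 [L1 [HB1 [HL1 [HBt1 HLt1]]]]].
    destruct (sol_lip n Om alpha F f HOm Halpha HF Hf M0 phi tau0 Hphi Htau0 Hnorm r A2 tau2 Hr0 Hr1 Hs2) as [B2 [L2 [HB2 [HL2 [HBt2 HLt2]]]]].
    set (B := Rmax B1 B2). set (Lam := Rmax L1 L2).
    destruct (F_lip_pos n Om F HF (B + K + 1) ltac:(pose proof (Rmax_l B1 B2); fold B in H; lra)) as [Lp' [HLp'0 HLp']].
    destruct (f_lower_c n Om f HOm Hf B) as [m [Hm0 Hm]].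
    apply (uniq_core n Om alpha F f HOm Halpha Hf M0 phi tau0 Hphi Htau0 Hnorm r A1 tau1 A2 tau2 Hr0 Hr1 Hs1 Hs2
      D1 D2 B Lam Lp' Lf m HD1 HD2 HE1 HE2 HI1 HI2); auto.
    + eapply Rle_trans; [exact HB1| apply Rmax_l].
    + eapply Rle_trans; [exact HL1| apply Rmax_l].
    + intros t x Ht. eapply Rle_trans; [apply HBt1; auto| apply Rmax_l].
    + intros t x Ht. eapply Rle_trans; [apply HBt2; auto| apply Rmax_r].
    + intros s s' x Hs Hs'. eapply Rle_trans; [apply HLt1; auto|]. apply Rmult_le_compat_r. apply Rabs_pos. apply Rmax_l.
    + intros s s' x Hs Hs'. eapply Rle_trans; [apply HLt2; auto|]. apply Rmult_le_compat_r. apply Rabs_pos. apply Rmax_r.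
Qed.
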